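(* Let $\Omega$ be a doubly periodic domain (flat $2$-torus), $p_1,\dots,p_N\in\Omega$ (not necessarily distinct) and $\lambda>0$. If $u$ is a solution of $$(1-e^u)\Delta u-e^u|\nabla u|^2=-\lambda e^u(e^u-1)^2+4\pi\sum_{s=1}^N\delta_{p_s}\quad\text{in }\Omega,$$ then $u<0$ throughout $\Omega$.
   Context: All functions are doubly periodic on $\Omega$; $\delta_p$ is the Dirac distribution at $p$. A solution means a function $u$, smooth on $\Omega$ minus the points $p_s$, satisfying $(1-e^u)\Delta u-e^u|\nabla u|^2=-\lambda e^u(e^u-1)^2$ pointwise away from the points, and such that near each point $p$ occurring with multiplicity $n$ among $p_1,\dots,p_N$, $u(x)=n\ln|x-p|^2+f(x)$ with $f$ smooth near $p$ (so $u\to-\infty$ at the points). *)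

(* Defs.v *)
From Stdlib Require Import Reals List ZArith ClassicalEpsilon.
From Coquelicot Require Import Coquelicot.
Open Scope R_scope.

Definition partial1 (f : R -> R -> R) : R -> R -> R :=
  fun x y => Derive (fun t => f t y) x.
Definition partial2 (f : R -> R -> R) : R -> R -> R :=
  fun x y => Derive (fun t => f x t) y.

(* iterated partial derivative; true = d/dx, false = d/dy *)
Fixpoint iter_partial (l : list bool) (f : R -> R -> R) : R -> R -> R :=
  match l with
  | nil => f
  | b :: l' => (if b then partial1 else partial2) (iter_partial l' f)
  end.

Definition smooth_on (U : R -> R -> Prop) (f : R -> R -> R) : Prop :=
  forall (l : list bool) (x y : R), U x y ->
    continuity_2d_pt (iter_partial l f) x y /\
    ex_derive (fun t => iter_partial l f t y) x /\
    ex_derive (fun t => iter_partial l f x t) y.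

Definition laplacian (u : R -> R -> R) : R -> R -> R :=
  fun x y => partial1 (partial1 u) x y + partial2 (partial2 u) x y.

Definition grad_sq (u : R -> R -> R) : R -> R -> R :=
  fun x y => (partial1 u x y) ^ 2 + (partial2 u x y) ^ 2.

(* The flat torus Omega = R^2 / (Z w1 + Z w2); congruence modulo the lattice *)
Definition lattice_equiv (w1 w2 : R * R) (a b : R * R) : Prop :=
  exists m k : Z,
    fst a - fst b = IZR m * fst w1 + IZR k * fst w2 /\
    snd a - snd b = IZR m * snd w1 + IZR k * snd w2.

Definition singular (w1 w2 : R * R) (ps : list (R * R)) (x y : R) : Prop :=
  exists p, In p ps /\ lattice_equiv w1 w2 (x, y) p.

Definition multiplicity (w1 w2 : R * R) (ps : list (R * R)) (q : R * R) : nat :=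
  length (filter (fun p => if excluded_middle_informative (lattice_equiv w1 w2 p q)
                           then true else false) ps).

Definition dist_sq (x y : R) (p : R * R) : R :=
  (x - fst p) ^ 2 + (y - snd p) ^ 2.

Definition is_solution (w1 w2 : R * R) (ps : list (R * R)) (lam : R)
    (u : R -> R -> R) : Prop :=
  (forall x y, ~ singular w1 w2 ps x y ->
     u (x + fst w1) (y + snd w1) = u x y /\ u (x + fst w2) (y + snd w2) = u x y) /\
  smooth_on (fun x y => ~ singular w1 w2 ps x y) u /\
  (forall x y, ~ singular w1 w2 ps x y ->
     (1 - exp (u x y)) * laplacian u x y - exp (u x y) * grad_sq u x y
       = - lam * exp (u x y) * (exp (u x y) - 1) ^ 2) /\
  (forall p, In p ps ->
     exists (r : R) (f : R -> R -> R), 0 < r /\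
       smooth_on (fun x y => dist_sq x y p < r ^ 2) f /\
       forall x y, 0 < dist_sq x y p < r ^ 2 ->
         u x y = INR (multiplicity w1 w2 ps p) * ln (dist_sq x y p) + f x y).

(* Main.v *)
Require Import Defs.
From Stdlib Require Import Reals List Lra Lia Psatz ZArith Classical ClassicalEpsilon.
From Coquelicot Require Import Coquelicot.
Open Scope R_scope.
Set Bullet Behavior "Strict Subproofs".


Lemma dpos_right (f : R -> R) x l : derivable_pt_lim f x l -> 0 < l ->
  exists d, 0 < d /\ forall h, 0 < h < d -> f (x + h) > f x.
Proof.
  intros Hd Hl. destruct (Hd (l/2)) as [d Hd2]; [lra|].
  exists d; split; [apply cond_pos|]. intros h Hh.
  assert (Hh0 : h <> 0) by lra.
  assert (Ha : Rabs h < d) by (rewrite Rabs_pos_eq; lra).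
  specialize (Hd2 h Hh0 Ha).
  apply Rabs_def2 in Hd2. destruct Hd2 as [_ H2].
  assert (0 < (f (x + h) - f x) / h) by lra.
  assert (0 < (f (x + h) - f x)).
  { replace (f (x+h) - f x) with ((f (x + h) - f x) / h * h) by (field; lra). nra. }
  lra.
Qed.

Lemma dneg_left (f : R -> R) x l : derivable_pt_lim f x l -> l < 0 ->
  exists d, 0 < d /\ forall h, - d < h < 0 -> f (x + h) > f x.
Proof.
  intros Hd Hl. destruct (Hd (-l/2)) as [d Hd2]; [lra|].
  exists d; split; [apply cond_pos|]. intros h Hh.
  assert (Hh0 : h <> 0) by lra.
  assert (Ha : Rabs h < d) by (rewrite Rabs_left; lra).
  specialize (Hd2 h Hh0 Ha).
  apply Rabs_def2 in Hd2. destruct Hd2 as [H1 _].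
  assert ((f (x + h) - f x) / h < 0) by lra.
  assert (0 < (f (x + h) - f x)).
  { replace (f (x+h) - f x) with ((f (x + h) - f x) / h * h) by (field; lra). nra. }
  lra.
Qed.

Lemma max_1d (phi : R -> R) x0 d :
  0 < d -> (forall t, Rabs (t - x0) < d -> phi t <= phi x0) ->
  (forall t, Rabs (t - x0) < d -> ex_derive phi t) ->
  ex_derive (Derive phi) x0 ->
  Derive phi x0 = 0 /\ Derive (Derive phi) x0 <= 0.
Proof.
  intros Hd Hmax Hder Hder2.
  assert (Hcl : forall t, Rabs (t - x0) < d -> phi t <= phi x0) by exact Hmax.
  assert (D0 : Derive phi x0 = 0).
  { assert (Hl := Derive_correct phi x0 (Hder x0 ltac:(rewrite Rminus_diag, Rabs_R0; lra))).
    apply is_derive_Reals in Hl.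
    destruct (Rtotal_order (Derive phi x0) 0) as [Hn|[He|Hp]]; auto.
    - destruct (dneg_left _ _ _ Hl Hn) as [d1 [Hd1 H1]].
      assert (Hk : 0 < Rmin d d1 /\ Rmin d d1 <= d /\ Rmin d d1 <= d1)
        by (unfold Rmin; destruct Rle_dec; lra).
      set (k := Rmin d d1) in *.
      specialize (H1 (- (k / 2)) ltac:(lra)).
      assert (phi (x0 + - (k / 2)) <= phi x0).
      { apply Hmax. rewrite Rabs_left; lra. }
      lra.
    - destruct (dpos_right _ _ _ Hl Hp) as [d1 [Hd1 H1]].
      assert (Hk : 0 < Rmin d d1 /\ Rmin d d1 <= d /\ Rmin d d1 <= d1)
        by (unfold Rmin; destruct Rle_dec; lra).
      set (k := Rmin d d1) in *.
      specialize (H1 (k / 2) ltac:(lra)).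
      assert (phi (x0 + k / 2) <= phi x0).
      { apply Hmax. rewrite Rabs_pos_eq; lra. }
      lra. }
  split; auto.
  destruct (Rle_or_lt (Derive (Derive phi) x0) 0) as [Hle|Hp]; auto.
  exfalso.
  assert (Hl := Derive_correct _ x0 Hder2). apply is_derive_Reals in Hl.
  destruct (dpos_right _ _ _ Hl Hp) as [d1 [Hd1 H1]].
  rewrite D0 in H1.
  set (h := Rmin d d1 / 2).
  assert (Hh : 0 < h /\ h < d /\ h < d1) by (unfold h, Rmin; destruct Rle_dec; lra).
  assert (Hpos : forall t, x0 < t <= x0 + h -> Derive phi t > 0).
  { intros t Ht. replace t with (x0 + (t - x0)) by ring. apply H1. lra. }
  assert (Hin : forall t, x0 <= t <= x0 + h -> Rabs (t - x0) < d).
  { intros t Ht. rewrite Rabs_pos_eq; lra. }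
  assert (MV : forall a b, x0 <= a -> a < b -> b <= x0 + h ->
     exists c, a <= c <= b /\ phi b - phi a = Derive phi c * (b - a)).
  { intros a b Ha Hab Hb.
    destruct (MVT_gen phi a b (Derive phi)) as [c [Hc Hc2]].
    - intros x Hx. rewrite Rmin_left in Hx by lra. rewrite Rmax_right in Hx by lra.
      apply Derive_correct, Hder, Hin; lra.
    - intros x Hx. rewrite Rmin_left in Hx by lra. rewrite Rmax_right in Hx by lra.
      apply continuity_pt_filterlim. exact (ex_derive_continuous phi x (Hder x ltac:(apply Hin; lra))).
    - exists c. rewrite Rmin_left in Hc by lra. rewrite Rmax_right in Hc by lra. auto. }
  destruct (MV x0 (x0 + h/2)) as [c1 [Hc1 E1]]; try lra.
  destruct (MV (x0 + h/2) (x0 + h)) as [c2 [Hc2 E2]]; try lra.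
  assert (G1 : Derive phi c1 >= 0).
  { destruct (Req_dec c1 x0) as [->|Hne]; [lra|]. left; apply Hpos; lra. }
  assert (G2 : Derive phi c2 > 0) by (apply Hpos; lra).
  assert (phi (x0 + h) <= phi x0) by (apply Hmax; rewrite Rabs_pos_eq; lra).
  nra.
Qed.


Lemma betw a b c : Rmin a b <= c <= Rmax a b -> Rabs (c - a) <= Rabs (b - a).
Proof.
  unfold Rmin, Rmax; destruct Rle_dec; intros H;
  unfold Rabs; repeat destruct Rcase_abs; lra.
Qed.

Lemma MVT_abs (g dg : R -> R) a b d :
  (forall t, Rabs (t - a) < d -> is_derive g t (dg t)) -> Rabs (b - a) < d ->
  exists c, Rabs (c - a) <= Rabs (b - a) /\ g b - g a = dg c * (b - a).
Proof.
  intros Hg Hb.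
  destruct (MVT_gen g a b dg) as [c [Hc E]].
  - intros x Hx. apply Hg. assert (Rabs (x - a) <= Rabs (b - a)) by (apply betw; lra). lra.
  - intros x Hx. assert (Rabs (x - a) <= Rabs (b - a)) by (apply betw; lra).
    apply continuity_pt_filterlim.
    exact (ex_derive_continuous g x (ex_intro _ _ (Hg x ltac:(lra)))).
  - exists c; split; auto. apply betw; auto.
Qed.

Lemma C1_diff (F Fx Fy : R -> R -> R) x y d : 0 < d ->
  (forall u v, Rabs (u - x) < d -> Rabs (v - y) < d ->
     is_derive (fun t => F t v) u (Fx u v) /\ is_derive (fun t => F u t) v (Fy u v)) ->
  continuity_2d_pt Fx x y -> continuity_2d_pt Fy x y ->
  differentiable_pt_lim F x y (Fx x y) (Fy x y).
Proof.
  intros Hd HD Cx Cy eps.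
  assert (He2 : 0 < eps / 2) by (destruct eps; simpl; lra).
  destruct (Cx (mkposreal _ He2)) as [d1 H1].
  destruct (Cy (mkposreal _ He2)) as [d2 H2]. simpl in H1, H2.
  assert (Hm : 0 < Rmin d (Rmin d1 d2)).
  { destruct d1, d2; simpl. repeat apply Rmin_pos; lra. }
  exists (mkposreal _ Hm). simpl. intros u v Hu Hv.
  assert (Hu1 : Rabs (u - x) < d /\ Rabs (u - x) < d1 /\ Rabs (u - x) < d2).
  { revert Hu; unfold Rmin; repeat destruct Rle_dec; lra. }
  assert (Hv1 : Rabs (v - y) < d /\ Rabs (v - y) < d1 /\ Rabs (v - y) < d2).
  { revert Hv; unfold Rmin; repeat destruct Rle_dec; lra. }
  destruct (MVT_abs (fun t => F t v) (fun t => Fx t v) x u d) as [c [Hc Ec]].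
  { intros t Ht. apply HD; lra. } { lra. }
  destruct (MVT_abs (fun t => F x t) (fun t => Fy x t) y v d) as [e [He Ee]].
  { intros t Ht. apply HD; [rewrite Rminus_diag, Rabs_R0; lra| lra]. } { lra. }
  simpl in Ec, Ee.
  assert (B1 : Rabs (Fx c v - Fx x y) < eps / 2) by (apply H1; lra).
  assert (B2 : Rabs (Fy x e - Fy x y) < eps / 2).
  { apply H2; [rewrite Rminus_diag, Rabs_R0; destruct d2; simpl; lra | lra]. }
  replace (F u v - F x y - (Fx x y * (u - x) + Fy x y * (v - y)))
    with ((Fx c v - Fx x y) * (u - x) + (Fy x e - Fy x y) * (v - y)) by lra.
  eapply Rle_trans; [apply Rabs_triang|]. rewrite !Rabs_mult.
  assert (Rabs (u - x) <= Rmax (Rabs (u - x)) (Rabs (v - y))) by apply Rmax_l.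
  assert (Rabs (v - y) <= Rmax (Rabs (u - x)) (Rabs (v - y))) by apply Rmax_r.
  assert (0 <= Rabs (u - x)) by apply Rabs_pos.
  assert (0 <= Rabs (v - y)) by apply Rabs_pos.
  nra.
Qed.


Lemma is_derive_eq (f : R -> R) x l l' : is_derive f x l -> l = l' -> is_derive f x l'.
Proof. intros H ->; exact H. Qed.

Lemma cos_lip a b : Rabs (cos b - cos a) <= Rabs (b - a).
Proof.
  destruct (MVT_abs cos (fun t => - sin t) a b (Rabs (b - a) + 1)) as [c [_ E]].
  - intros t _. apply is_derive_cos.
  - lra.
  - rewrite E, Rabs_mult, Rabs_Ropp. pose proof (SIN_bound c).
    assert (Rabs (sin c) <= 1) by (apply Rabs_le; lra).
    pose proof (Rabs_pos (b - a)). nra.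
Qed.

Lemma sin_lip a b : Rabs (sin b - sin a) <= Rabs (b - a).
Proof.
  destruct (MVT_abs sin cos a b (Rabs (b - a) + 1)) as [c [_ E]].
  - intros t _. apply is_derive_sin.
  - lra.
  - rewrite E, Rabs_mult. pose proof (COS_bound c).
    assert (Rabs (cos c) <= 1) by (apply Rabs_le; lra).
    pose proof (Rabs_pos (b - a)). nra.
Qed.

Lemma trig_lip r th r' th' :
  Rabs (r' * cos th' - r * cos th) <= Rabs (r' - r) + Rabs r * Rabs (th' - th) /\
  Rabs (r' * sin th' - r * sin th) <= Rabs (r' - r) + Rabs r * Rabs (th' - th).
Proof.
  pose proof (cos_lip th th'). pose proof (sin_lip th th').
  assert (Rabs (cos th') <= 1) by (apply Rabs_le; pose proof (COS_bound th'); lra).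
  assert (Rabs (sin th') <= 1) by (apply Rabs_le; pose proof (SIN_bound th'); lra).
  pose proof (Rabs_pos (r' - r)). pose proof (Rabs_pos r).
  split.
  - replace (r' * cos th' - r * cos th) with ((r' - r) * cos th' + r * (cos th' - cos th)) by ring.
    eapply Rle_trans; [apply Rabs_triang|]. rewrite !Rabs_mult. nra.
  - replace (r' * sin th' - r * sin th) with ((r' - r) * sin th' + r * (sin th' - sin th)) by ring.
    eapply Rle_trans; [apply Rabs_triang|]. rewrite !Rabs_mult. nra.
Qed.

Definition polar (G : R -> R -> R) x0 y0 : R -> R -> R :=
  fun r th => G (x0 + r * cos th) (y0 + r * sin th).

Lemma cont_polar G x0 y0 r th :
  continuity_2d_pt G (x0 + r * cos th) (y0 + r * sin th) ->
  continuity_2d_pt (polar G x0 y0) r th.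
Proof.
  intros HC eps. destruct (HC eps) as [d Hd].
  assert (Hp : 0 < d / (2 + Rabs r)) by (apply Rdiv_lt_0_compat; [apply cond_pos| pose proof (Rabs_pos r); lra]).
  exists (mkposreal _ Hp). simpl. intros r' th' Hr Ht.
  unfold polar. destruct (trig_lip r th r' th') as [T1 T2].
  pose proof (Rabs_pos r). pose proof (cond_pos d).
  assert (Hk : Rabs (r' - r) + Rabs r * Rabs (th' - th) < d).
  { apply Rle_lt_trans with ((1 + Rabs r) * (d / (2 + Rabs r))).
    - pose proof (Rabs_pos (r' - r)). pose proof (Rabs_pos (th' - th)). nra.
    - assert (E : (2 + Rabs r) * (d / (2 + Rabs r)) = d) by (field; lra). nra. }
  apply Hd.
  - replace (x0 + r' * cos th' - (x0 + r * cos th)) with (r' * cos th' - r * cos th) by ring. lra.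
  - replace (y0 + r' * sin th' - (y0 + r * sin th)) with (r' * sin th' - r * sin th) by ring. lra.
Qed.

Lemma cont_2d_1d_2 (f : R -> R -> R) x y : continuity_2d_pt f x y -> continuity_pt (fun t => f x t) y.
Proof.
  intros H. apply continuity_pt_filterlim. unfold filterlim, filter_le, filtermap. intros P HP; destruct HP as [eps HP].
  destruct (H eps) as [d Hd]. exists d. intros t Ht. apply HP.
  apply Hd; [rewrite Rminus_diag, Rabs_R0; apply cond_pos| exact Ht].
Qed.

Lemma cont_2d_1d_1 (f : R -> R -> R) x y : continuity_2d_pt f x y -> continuity_pt (fun t => f t y) x.
Proof.
  intros H. apply continuity_pt_filterlim. unfold filterlim, filter_le, filtermap. intros P HP; destruct HP as [eps HP].
  destruct (H eps) as [d Hd]. exists d. intros t Ht. apply HP.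
  apply Hd; [exact Ht | rewrite Rminus_diag, Rabs_R0; apply cond_pos].
Qed.

Definition C1box x0 y0 rho (G Gx Gy : R -> R -> R) :=
  forall u v, Rabs (u - x0) < rho -> Rabs (v - y0) < rho ->
    is_derive (fun t => G t v) u (Gx u v) /\ is_derive (fun t => G u t) v (Gy u v) /\
    continuity_2d_pt Gx u v /\ continuity_2d_pt Gy u v.

Lemma C1box_diff x0 y0 rho G Gx Gy u v : C1box x0 y0 rho G Gx Gy ->
  Rabs (u - x0) < rho -> Rabs (v - y0) < rho ->
  differentiable_pt_lim G u v (Gx u v) (Gy u v).
Proof.
  intros HC Hu Hv.
  set (d := Rmin (rho - Rabs (u - x0)) (rho - Rabs (v - y0))).
  assert (Hd : 0 < d /\ d <= rho - Rabs (u - x0) /\ d <= rho - Rabs (v - y0))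
    by (unfold d, Rmin; destruct Rle_dec; lra).
  apply (C1_diff G Gx Gy u v d); try lra.
  - intros a b Ha Hb.
    assert (Rabs (a - x0) < rho).
    { replace (a - x0) with ((a - u) + (u - x0)) by ring.
      eapply Rle_lt_trans; [apply Rabs_triang| lra]. }
    assert (Rabs (b - y0) < rho).
    { replace (b - y0) with ((b - v) + (v - y0)) by ring.
      eapply Rle_lt_trans; [apply Rabs_triang| lra]. }
    destruct (HC a b) as [A [B _]]; auto.
  - apply (HC u v); auto.
  - apply (HC u v); auto.
Qed.

Lemma in_box_polar x0 y0 rho r th : Rabs r < rho ->
  Rabs (x0 + r * cos th - x0) < rho /\ Rabs (y0 + r * sin th - y0) < rho.
Proof.
  intros H.
  assert (Rabs (cos th) <= 1) by (apply Rabs_le; pose proof (COS_bound th); lra).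
  assert (Rabs (sin th) <= 1) by (apply Rabs_le; pose proof (SIN_bound th); lra).
  pose proof (Rabs_pos r).
  replace (x0 + r * cos th - x0) with (r * cos th) by ring.
  replace (y0 + r * sin th - y0) with (r * sin th) by ring.
  rewrite !Rabs_mult. split; nra.
Qed.

Lemma polar_dr x0 y0 rho G Gx Gy r th : C1box x0 y0 rho G Gx Gy -> Rabs r < rho ->
  is_derive (fun s => polar G x0 y0 s th) r
    (cos th * polar Gx x0 y0 r th + sin th * polar Gy x0 y0 r th).
Proof.
  intros HC Hr. destruct (in_box_polar x0 y0 rho r th Hr) as [A B].
  apply is_derive_Reals. unfold polar.
  replace (cos th * Gx (x0 + r * cos th) (y0 + r * sin th) + sin th * Gy (x0 + r * cos th) (y0 + r * sin th))
      with (Gx (x0 + r * cos th) (y0 + r * sin th) * cos th + Gy (x0 + r * cos th) (y0 + r * sin th) * sin th) by ring.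
  apply (derivable_pt_lim_comp_2d G (fun s => x0 + s * cos th) (fun s => y0 + s * sin th)).
  - apply (C1box_diff x0 y0 rho); auto.
  - apply is_derive_Reals. auto_derive; auto; ring.
  - apply is_derive_Reals. auto_derive; auto; ring.
Qed.

Lemma polar_dth x0 y0 rho G Gx Gy r th : C1box x0 y0 rho G Gx Gy -> Rabs r < rho ->
  is_derive (fun t => polar G x0 y0 r t) th
    (- r * sin th * polar Gx x0 y0 r th + r * cos th * polar Gy x0 y0 r th).
Proof.
  intros HC Hr. destruct (in_box_polar x0 y0 rho r th Hr) as [A B].
  apply is_derive_Reals. unfold polar.
  replace (- r * sin th * Gx (x0 + r * cos th) (y0 + r * sin th) + r * cos th * Gy (x0 + r * cos th) (y0 + r * sin th))
      with (Gx (x0 + r * cos th) (y0 + r * sin th) * (- r * sin th) + Gy (x0 + r * cos th) (y0 + r * sin th) * (r * cos th)) by ring.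
  apply (derivable_pt_lim_comp_2d G (fun t => x0 + r * cos t) (fun t => y0 + r * sin t)).
  - apply (C1box_diff x0 y0 rho); auto.
  - apply is_derive_Reals. auto_derive; auto; ring.
  - apply is_derive_Reals. auto_derive; auto; ring.
Qed.


Definition C2box x0 y0 rho (H Hx Hy Hxx Hxy Hyx Hyy : R -> R -> R) :=
  C1box x0 y0 rho H Hx Hy /\ C1box x0 y0 rho Hx Hxx Hxy /\ C1box x0 y0 rho Hy Hyx Hyy /\
  (forall u v, Rabs (u - x0) < rho -> Rabs (v - y0) < rho ->
    continuity_2d_pt Hxx u v /\ continuity_2d_pt Hxy u v /\
    continuity_2d_pt Hyx u v /\ continuity_2d_pt Hyy u v).

Definition D1f x0 y0 (Hx Hy : R -> R -> R) r th :=
  cos th * polar Hx x0 y0 r th + sin th * polar Hy x0 y0 r th.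
Definition D2f x0 y0 (Hxx Hxy Hyx Hyy : R -> R -> R) r th :=
  cos th * (cos th * polar Hxx x0 y0 r th + sin th * polar Hxy x0 y0 r th) +
  sin th * (cos th * polar Hyx x0 y0 r th + sin th * polar Hyy x0 y0 r th).
Definition T1f x0 y0 (Hx Hy : R -> R -> R) r th :=
  - r * sin th * polar Hx x0 y0 r th + r * cos th * polar Hy x0 y0 r th.
Definition T2f x0 y0 (Hx Hy Hxx Hxy Hyx Hyy : R -> R -> R) r th :=
  (- r * cos th * polar Hx x0 y0 r th +
   - r * sin th * (- r * sin th * polar Hxx x0 y0 r th + r * cos th * polar Hxy x0 y0 r th)) +
  (- r * sin th * polar Hy x0 y0 r th +
   r * cos th * (- r * sin th * polar Hyx x0 y0 r th + r * cos th * polar Hyy x0 y0 r th)).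

Lemma key_identity x0 y0 Hx Hy Hxx Hxy Hyx Hyy r th :
  r ^ 2 * D2f x0 y0 Hxx Hxy Hyx Hyy r th + r * D1f x0 y0 Hx Hy r th
  + T2f x0 y0 Hx Hy Hxx Hxy Hyx Hyy r th
  = r ^ 2 * (polar Hxx x0 y0 r th + polar Hyy x0 y0 r th).
Proof.
  unfold D2f, D1f, T2f. pose proof (sin2_cos2 th). unfold Rsqr in H.
  set (a := polar Hxx x0 y0 r th). set (b := polar Hyy x0 y0 r th).
  set (c := polar Hxy x0 y0 r th). set (d := polar Hyx x0 y0 r th).
  set (p := polar Hx x0 y0 r th). set (q := polar Hy x0 y0 r th).
  set (s := sin th) in *. set (k := cos th) in *.
  replace (r ^ 2 * (a + b)) with (r ^ 2 * (a + b) * (s * s + k * k)) by (rewrite H; ring).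
  ring.
Qed.



Lemma cont_polar_C1 x0 y0 rho G Gx Gy r th : C1box x0 y0 rho G Gx Gy -> Rabs r < rho ->
  continuity_2d_pt (polar G x0 y0) r th.
Proof.
  intros HC Hr. destruct (in_box_polar x0 y0 rho r th Hr) as [A B].
  apply cont_polar. apply differentiable_continuity_pt.
  eexists; eexists. apply (C1box_diff x0 y0 rho G Gx Gy); eauto.
Qed.

Lemma cont_cos2 r th : continuity_2d_pt (fun _ t => cos t) r th.
Proof.
  apply (continuity_1d_2d_pt_comp cos (fun _ t => t)).
  apply continuity_cos. apply continuity_2d_pt_id2.
Qed.
Lemma cont_sin2 r th : continuity_2d_pt (fun _ t => sin t) r th.
Proof.
  apply (continuity_1d_2d_pt_comp sin (fun _ t => t)).
  apply continuity_sin. apply continuity_2d_pt_id2.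
Qed.

Ltac cont2 := repeat first
  [ apply continuity_2d_pt_plus
  | apply continuity_2d_pt_mult
  | apply continuity_2d_pt_opp
  | apply cont_cos2 | apply cont_sin2
  | apply continuity_2d_pt_id1 | apply continuity_2d_pt_const ].

Lemma F2 x0 y0 rho H Hx Hy Hxx Hxy Hyx Hyy r th :
  C2box x0 y0 rho H Hx Hy Hxx Hxy Hyx Hyy -> Rabs r < rho ->
  is_derive (fun s => D1f x0 y0 Hx Hy s th) r (D2f x0 y0 Hxx Hxy Hyx Hyy r th).
Proof.
  intros [C0 [Cx [Cy _]]] Hr. unfold D1f, D2f.
  apply (is_derive_plus (fun s => cos th * polar Hx x0 y0 s th) (fun s => sin th * polar Hy x0 y0 s th)).
  - apply is_derive_scal. apply (polar_dr x0 y0 rho); auto.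
  - apply is_derive_scal. apply (polar_dr x0 y0 rho); auto.
Qed.

Lemma F4 x0 y0 rho H Hx Hy Hxx Hxy Hyx Hyy r th :
  C2box x0 y0 rho H Hx Hy Hxx Hxy Hyx Hyy -> Rabs r < rho ->
  is_derive (fun t => T1f x0 y0 Hx Hy r t) th (T2f x0 y0 Hx Hy Hxx Hxy Hyx Hyy r th).
Proof.
  intros [C0 [Cx [Cy _]]] Hr. unfold T1f, T2f.
  apply (is_derive_plus (fun t => - r * sin t * polar Hx x0 y0 r t) (fun t => r * cos t * polar Hy x0 y0 r t)).
  - eapply is_derive_eq.
    + apply (is_derive_mult (fun t => - r * sin t) (fun t => polar Hx x0 y0 r t)).
      * auto_derive; auto. 
      * apply (polar_dth x0 y0 rho Hx Hxx Hxy); auto.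
      * intros; apply Rmult_comm.
    + unfold plus, mult; simpl. ring.
  - eapply is_derive_eq.
    + apply (is_derive_mult (fun t => r * cos t) (fun t => polar Hy x0 y0 r t)).
      * auto_derive; auto.
      * apply (polar_dth x0 y0 rho Hy Hyx Hyy); auto.
      * intros; apply Rmult_comm.
    + unfold plus, mult; simpl. ring.
Qed.

Lemma contD x0 y0 rho H Hx Hy Hxx Hxy Hyx Hyy r th :
  C2box x0 y0 rho H Hx Hy Hxx Hxy Hyx Hyy -> Rabs r < rho ->
  continuity_2d_pt (polar H x0 y0) r th /\
  continuity_2d_pt (D1f x0 y0 Hx Hy) r th /\
  continuity_2d_pt (D2f x0 y0 Hxx Hxy Hyx Hyy) r th /\
  continuity_2d_pt (T2f x0 y0 Hx Hy Hxx Hxy Hyx Hyy) r th /\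
  continuity_2d_pt (fun r th => polar Hxx x0 y0 r th + polar Hyy x0 y0 r th) r th.
Proof.
  intros [C0 [Cx [Cy C2]]] Hr. destruct (in_box_polar x0 y0 rho r th Hr) as [A B].
  destruct (C0 _ _ A B) as [_ [_ [Kx Ky]]].
  destruct (C2 _ _ A B) as [K1 [K2 [K3 K4]]].
  assert (P1 := cont_polar _ x0 y0 r th Kx).
  assert (P2 := cont_polar _ x0 y0 r th Ky).
  assert (P3 := cont_polar _ x0 y0 r th K1).
  assert (P4 := cont_polar _ x0 y0 r th K2).
  assert (P5 := cont_polar _ x0 y0 r th K3).
  assert (P6 := cont_polar _ x0 y0 r th K4).
  repeat split.
  - apply (cont_polar_C1 x0 y0 rho H Hx Hy); auto.
  - unfold D1f. cont2; auto.
  - unfold D2f. cont2; auto.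
  - unfold T2f. cont2; auto.
  - cont2; auto.
Qed.

Lemma ball_R (x y e : R) : Rabs (y - x) < e -> ball x e y.
Proof. intros H. exact H. Qed.

Lemma deriv_under (f df : R -> R -> R) r a b rho : a <= b -> Rabs r < rho ->
  (forall s t, Rabs s < rho -> is_derive (fun z => f z t) s (df s t)) ->
  (forall s t, Rabs s < rho -> continuity_2d_pt df s t) ->
  (forall s t, Rabs s < rho -> continuity_pt (fun t => f s t) t) ->
  is_derive (fun s => RInt (f s) a b) r (RInt (df r) a b).
Proof.
  intros Hab Hr Hd Hc Hf.
  assert (Hp : 0 < rho - Rabs r) by lra.
  assert (Hin : forall x, Rabs (x - r) < rho - Rabs r -> Rabs x < rho).
  { intros x Hx. replace x with ((x - r) + r) by ring.
    eapply Rle_lt_trans; [apply Rabs_triang| lra]. }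
  replace (RInt (df r) a b) with (RInt (fun t => Derive (fun u => f u t) r) a b).
  2:{ apply RInt_ext. intros x _. apply is_derive_unique. apply Hd; auto. }
  apply (is_derive_RInt_param f a b r).
  - exists (mkposreal _ Hp). intros x Hx t _. eexists. apply Hd. apply Hin. exact Hx.
  - intros t _. apply (continuity_2d_pt_ext_loc df).
    + exists (mkposreal _ Hp). simpl. intros u v Hu _. symmetry. apply is_derive_unique, Hd. auto.
    + apply Hc; auto.
  - exists (mkposreal _ Hp). intros x Hx. apply (ex_RInt_continuous (V := R_CompleteNormedModule)). intros z _.
    apply continuity_pt_filterlim. apply Hf. apply Hin. exact Hx.
Qed.

Lemma exRI (g : R -> R -> R) r a b : (forall t, continuity_2d_pt g r t) -> ex_RInt (g r) a b.
Proof.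
  intros H. apply (ex_RInt_continuous (V := R_CompleteNormedModule)). intros z _.
  apply continuity_pt_filterlim. apply cont_2d_1d_2. apply H.
Qed.

Lemma RInt_lin2 (f g : R -> R) a b k l : ex_RInt f a b -> ex_RInt g a b ->
  RInt (fun t => k * f t + l * g t) a b = k * RInt f a b + l * RInt g a b.
Proof.
  intros Hf Hg. apply is_RInt_unique.
  apply (is_RInt_ext (fun t => plus (scal k (f t)) (scal l (g t)))).
  - intros; reflexivity.
  - apply (is_RInt_plus (V := R_NormedModule)); apply (is_RInt_scal (V := R_NormedModule));
      apply (RInt_correct (V := R_CompleteNormedModule)); auto.
Qed.

Lemma T2_int x0 y0 rho H Hx Hy Hxx Hxy Hyx Hyy r :
  C2box x0 y0 rho H Hx Hy Hxx Hxy Hyx Hyy -> Rabs r < rho ->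
  RInt (T2f x0 y0 Hx Hy Hxx Hxy Hyx Hyy r) 0 (2 * PI) = 0.
Proof.
  intros HC Hr.
  assert (HH : is_RInt (T2f x0 y0 Hx Hy Hxx Hxy Hyx Hyy r) 0 (2 * PI)
      (minus (T1f x0 y0 Hx Hy r (2 * PI)) (T1f x0 y0 Hx Hy r 0))).
  { apply (is_RInt_derive (V := R_CompleteNormedModule)).
    + intros x _. apply (F4 x0 y0 rho H); auto.
    + intros x _. apply continuity_pt_filterlim. apply cont_2d_1d_2.
      apply (contD x0 y0 rho H Hx Hy Hxx Hxy Hyx Hyy); auto. }
  apply (is_RInt_unique (V := R_CompleteNormedModule)) in HH. rewrite HH.
  unfold T1f, polar. rewrite cos_2PI, sin_2PI, cos_0, sin_0.
  unfold minus, plus, opp; simpl. ring.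
Qed.

Lemma RInt_ext_R (f g : R -> R) a b : (forall x, f x = g x) -> RInt f a b = RInt g a b.
Proof. intros H. apply RInt_ext. intros; apply H. Qed.

Lemma avg_ineq x0 y0 rho H Hx Hy Hxx Hxy Hyx Hyy C r :
  C2box x0 y0 rho H Hx Hy Hxx Hxy Hyx Hyy ->
  (forall u v, Rabs (u - x0) < rho -> Rabs (v - y0) < rho -> Hxx u v + Hyy u v <= C * H u v) ->
  0 < r < rho ->
  r ^ 2 * RInt (D2f x0 y0 Hxx Hxy Hyx Hyy r) 0 (2 * PI)
  + r * RInt (D1f x0 y0 Hx Hy r) 0 (2 * PI)
  <= C * r ^ 2 * RInt (polar H x0 y0 r) 0 (2 * PI).
Proof.
  intros HC HL Hr.
  assert (Hr' : Rabs r < rho) by (rewrite Rabs_pos_eq; lra).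
  assert (CD := fun t => contD x0 y0 rho H Hx Hy Hxx Hxy Hyx Hyy r t HC Hr').
  assert (E1 : ex_RInt (D1f x0 y0 Hx Hy r) 0 (2 * PI)) by (apply exRI; intros t; apply CD).
  assert (E2 : ex_RInt (D2f x0 y0 Hxx Hxy Hyx Hyy r) 0 (2 * PI)) by (apply exRI; intros t; apply CD).
  assert (E0 : ex_RInt (polar H x0 y0 r) 0 (2 * PI)) by (apply exRI; intros t; apply CD).
  assert (ET : ex_RInt (T2f x0 y0 Hx Hy Hxx Hxy Hyx Hyy r) 0 (2 * PI)) by (apply exRI; intros t; apply CD).
  assert (EL : ex_RInt (fun t => polar Hxx x0 y0 r t + polar Hyy x0 y0 r t) 0 (2 * PI)).
  { apply (exRI (fun r t => polar Hxx x0 y0 r t + polar Hyy x0 y0 r t)). intros t; apply CD. }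
  rewrite <- RInt_lin2 by auto.
  rewrite (RInt_ext_R _ (fun t => r ^ 2 * (polar Hxx x0 y0 r t + polar Hyy x0 y0 r t)
                               + (-1) * T2f x0 y0 Hx Hy Hxx Hxy Hyx Hyy r t)).
  2:{ intros t. rewrite <- (key_identity x0 y0 Hx Hy Hxx Hxy Hyx Hyy r t). ring. }
  rewrite RInt_lin2 by auto.
  rewrite (T2_int x0 y0 rho H Hx Hy Hxx Hxy Hyx Hyy r HC Hr').
  assert (RInt (fun t => polar Hxx x0 y0 r t + polar Hyy x0 y0 r t) 0 (2 * PI)
          <= C * RInt (polar H x0 y0 r) 0 (2 * PI)).
  { transitivity (RInt (fun t => C * polar H x0 y0 r t) 0 (2 * PI)).
    - apply RInt_le.
      + pose proof PI_RGT_0; lra.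
      + auto.
      + apply (ex_RInt_scal (V := R_NormedModule) (polar H x0 y0 r)). auto.
      + intros t _. destruct (in_box_polar x0 y0 rho r t Hr') as [A B].
        unfold polar. apply HL; auto.
    - right. replace (C * RInt (polar H x0 y0 r) 0 (2 * PI)) with
        (C * RInt (polar H x0 y0 r) 0 (2 * PI) + 0 * RInt (polar H x0 y0 r) 0 (2 * PI)) by ring.
      rewrite <- RInt_lin2 by auto. apply RInt_ext_R. intros; ring. }
  assert (0 <= r ^ 2) by (apply pow2_ge_0). nra.
Qed.


Lemma nonincr (g dg : R -> R) a b : a < b ->
  (forall x, a < x < b -> is_derive g x (dg x) /\ dg x <= 0) ->
  (forall x, a <= x <= b -> continuity_pt g x) -> g b <= g a.
Proof.
  intros Hab Hd Hc.
  set (df := fun x => if Rlt_dec a x then if Rlt_dec x b then dg x else 0 else 0).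
  destruct (MVT_gen g a b df) as [c [Hc1 E]].
  - intros x Hx. rewrite Rmin_left, Rmax_right in Hx by lra.
    unfold df. destruct Rlt_dec; [|lra]. destruct Rlt_dec; [|lra]. apply Hd; auto.
  - intros x Hx. rewrite Rmin_left, Rmax_right in Hx by lra. apply Hc; auto.
  - assert (df c <= 0).
    { unfold df. destruct Rlt_dec; [|lra]. destruct Rlt_dec; [|lra]. apply Hd; lra. }
    nra.
Qed.

Lemma ex_RInt_cont (f : R -> R) a b : (forall x, continuity_pt f x) -> ex_RInt f a b.
Proof.
  intros H. apply (ex_RInt_continuous (V := R_CompleteNormedModule)). intros z _.
  apply continuity_pt_filterlim. apply H.
Qed.

Lemma RInt_ge0 (f : R -> R) a b : a <= b -> (forall x, continuity_pt f x) ->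
  (forall x, a <= x <= b -> 0 <= f x) -> 0 <= RInt f a b.
Proof.
  intros Hab Hc Hp.
  replace 0 with (RInt (fun _ => 0) a b).
  - apply RInt_le; auto.
    + apply ex_RInt_cont. intros; apply continuity_pt_const. intros u v; reflexivity.
    + apply ex_RInt_cont; auto.
    + intros x Hx; apply Hp; lra.
  - rewrite RInt_const. unfold scal; simpl; unfold mult; simpl; ring.
Qed.

Lemma zero_int (f : R -> R) a b : a < b -> (forall x, continuity_pt f x) ->
  (forall x, a <= x <= b -> 0 <= f x) -> RInt f a b = 0 ->
  forall x, a <= x <= b -> f x = 0.
Proof.
  intros Hab Hc Hp Hi x1 Hx1.
  destruct (Rle_lt_or_eq_dec 0 (f x1) (Hp x1 Hx1)) as [Hpos|]; auto.
  exfalso.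
  destruct (Hc x1 (f x1 / 2)) as [d [Hd Hd2]]; [lra|].
  set (c := Rmax a (x1 - d / 2)). set (e := Rmin b (x1 + d / 2)).
  assert (Hce : a <= c /\ c < e /\ e <= b /\ x1 - d/2 <= c /\ e <= x1 + d/2).
  { unfold c, e, Rmax, Rmin; repeat destruct Rle_dec; lra. }
  assert (Hf : forall x, c <= x <= e -> f x1 / 2 <= f x).
  { intros x Hx. destruct (Req_dec x x1) as [->|Hne]; [lra|].
    assert (Hdist : dist R_met (f x) (f x1) < f x1 / 2).
    { apply Hd2. split. { unfold D_x, no_cond; split; auto. }
      simpl. unfold R_dist. apply Rabs_def1; lra. }
    simpl in Hdist. unfold R_dist in Hdist. apply Rabs_def2 in Hdist. lra. }
  assert (E1 : ex_RInt f a c) by (apply ex_RInt_cont; auto).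
  assert (E2 : ex_RInt f c e) by (apply ex_RInt_cont; auto).
  assert (E3 : ex_RInt f e b) by (apply ex_RInt_cont; auto).
  assert (S : RInt f a b = RInt f a c + RInt f c e + RInt f e b).
  { rewrite <- (RInt_Chasles f a c b); auto.
    2:{ apply ex_RInt_cont; auto. }
    rewrite <- (RInt_Chasles f c e b); auto. unfold plus; simpl. ring. }
  assert (0 <= RInt f a c) by (apply RInt_ge0; [lra | auto | intros; apply Hp; lra]).
  assert (0 <= RInt f e b) by (apply RInt_ge0; [lra | auto | intros; apply Hp; lra]).
  assert ((e - c) * (f x1 / 2) <= RInt f c e).
  { replace ((e - c) * (f x1 / 2)) with (RInt (fun _ => f x1 / 2) c e).
    - apply RInt_le; auto; try lra.
      + apply ex_RInt_cont. intros; apply continuity_pt_const. intros u v; reflexivity.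
      + intros; apply Hf; lra.
    - rewrite RInt_const. unfold scal; simpl; unfold mult; simpl; ring. }
  nra.
Qed.

Lemma strong_min x0 y0 rho Q Qx Qy Qxx Qxy Qyx Qyy C :
  C2box x0 y0 rho Q Qx Qy Qxx Qxy Qyx Qyy -> 0 < rho -> 0 <= C ->
  (forall u v, Rabs (u - x0) < rho -> Rabs (v - y0) < rho ->
     0 <= Q u v /\ Qxx u v + Qyy u v <= C * Q u v) ->
  Q x0 y0 = 0 ->
  exists r0, 0 < r0 /\ forall t th, 0 <= t <= r0 -> 0 <= th <= 2 * PI -> polar Q x0 y0 t th = 0.
Proof.
  intros HC Hrho HCp HL H0.
  set (M := fun t => RInt (polar Q x0 y0 t) 0 (2 * PI)).
  set (I1 := fun t => RInt (D1f x0 y0 Qx Qy t) 0 (2 * PI)).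
  set (I2 := fun t => RInt (D2f x0 y0 Qxx Qxy Qyx Qyy t) 0 (2 * PI)).
  assert (HPI := PI_RGT_0).
  assert (CD := fun r t Hr => contD x0 y0 rho Q Qx Qy Qxx Qxy Qyx Qyy r t HC Hr).
  destruct HC as [C0 [Cx [Cy C2]]] eqn:HCe.
  assert (dM : forall t, Rabs t < rho -> is_derive M t (I1 t)).
  { intros t Ht. unfold M, I1.
    apply (deriv_under (polar Q x0 y0) (D1f x0 y0 Qx Qy) t 0 (2 * PI) rho); try lra; auto.
    - intros s th Hs. apply (polar_dr x0 y0 rho Q Qx Qy); auto.
    - intros s th Hs. apply CD; auto.
    - intros s th Hs. apply cont_2d_1d_2. apply CD; auto. }
  assert (dI1 : forall t, Rabs t < rho -> is_derive I1 t (I2 t)).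
  { intros t Ht. unfold I1, I2.
    apply (deriv_under (D1f x0 y0 Qx Qy) (D2f x0 y0 Qxx Qxy Qyx Qyy) t 0 (2 * PI) rho); try lra; auto.
    - intros s th Hs. apply (F2 x0 y0 rho Q); auto.
    - intros s th Hs. apply CD; auto.
    - intros s th Hs. apply cont_2d_1d_2. apply CD; auto. }
  assert (Mpos : forall t, Rabs t < rho -> 0 <= M t).
  { intros t Ht. unfold M. apply RInt_ge0; try lra.
    - intros th. apply cont_2d_1d_2. apply CD; auto.
    - intros th _. destruct (in_box_polar x0 y0 rho t th Ht) as [A B]. apply HL; auto. }
  assert (M0 : M 0 = 0).
  { unfold M. rewrite (RInt_ext_R _ (fun _ => 0)).
    - rewrite RInt_const. unfold scal; simpl; unfold mult; simpl; ring.
    - intros th. unfold polar. rewrite !Rmult_0_l, !Rplus_0_r. auto. }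
  set (r0 := Rmin (rho / 2) (1 / (C + 1))).
  assert (Hr0 : 0 < r0 /\ r0 < rho /\ r0 <= 1 / (C + 1)).
  { unfold r0, Rmin; destruct Rle_dec.
    - split; [lra|]. split; lra.
    - assert (0 < 1 / (C + 1)) by (apply Rdiv_lt_0_compat; lra). lra. }
  assert (HCr : C * r0 ^ 2 < 4).
  { assert (r0 * (C + 1) <= 1).
    { destruct Hr0 as [_ [_ Hb]]. apply Rmult_le_compat_r with (r := C + 1) in Hb; [|lra].
      replace (1 / (C + 1) * (C + 1)) with 1 in Hb by (field; lra). lra. }
    nra. }
  assert (Hin : forall t, 0 <= t <= r0 -> Rabs t < rho).
  { intros t Ht. rewrite Rabs_pos_eq; lra. }
  assert (Mc : forall t, 0 <= t <= r0 -> continuity_pt M t).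
  { intros t Ht. apply continuity_pt_filterlim.
    exact (ex_derive_continuous M t (ex_intro _ _ (dM t (Hin t Ht)))). }
  destruct (continuity_ab_maj M 0 r0) as [ts [Hts Hts2]]; [lra| auto |].
  set (Ms := M ts).
  assert (Ms0 : 0 <= Ms) by (apply Mpos, Hin; auto).
  assert (Mszero : Ms <= 0).
  { destruct (Req_dec ts 0) as [E|Hne].
    - unfold Ms. rewrite E, M0. lra.
    - assert (Htp : 0 < ts) by lra.
      assert (BI : forall t, 0 < t <= ts -> I1 t <= C * t * Ms / 2).
      { intros t Ht.
        set (psi := fun s => s * I1 s - C * s ^ 2 * Ms / 2).
        assert (dpsi : forall x, Rabs x < rho -> is_derive psi x (I1 x + x * I2 x - C * x * Ms)).
        { intros x Hxr. unfold psi. eapply is_derive_eq.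
          * apply (is_derive_minus (fun s => s * I1 s) (fun s => C * s ^ 2 * Ms / 2)).
            -- apply (is_derive_mult (fun s => s) I1). apply is_derive_id. apply dI1; auto.
               intros; apply Rmult_comm.
            -- auto_derive; auto.
          * unfold minus, plus, opp, mult, one; simpl. match goal with |- ?a = ?b => change (@eq R a b) end. field. }
        assert (psi t <= psi 0).
        { apply (nonincr psi (fun s => I1 s + s * I2 s - C * s * Ms)); try lra.
          - intros x Hxr. split.
            + apply dpsi, Hin; lra.
            + assert (Qx' : Rabs x < rho) by (apply Hin; lra).
              assert (A := avg_ineq x0 y0 rho Q Qx Qy Qxx Qxy Qyx Qyy C x HC
                        ltac:(intros u v Hu Hv; apply (proj2 (HL u v Hu Hv))) ltac:(split; lra)).
              fold (I1 x) (I2 x) in A. change (RInt (polar Q x0 y0 x) 0 (2 * PI)) with (M x) in A.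
              assert (M x <= Ms) by (apply Hts; lra).
              assert (C * x ^ 2 * M x <= C * x ^ 2 * Ms).
              { apply Rmult_le_compat_l; [apply Rmult_le_pos; [lra| apply pow2_ge_0]| lra]. }
              assert (x * (I1 x + x * I2 x) <= x * (C * x * Ms)).
              { replace (x * (I1 x + x * I2 x)) with (x ^ 2 * I2 x + x * I1 x) by ring.
                replace (x * (C * x * Ms)) with (C * x ^ 2 * Ms) by ring. lra. }
              assert (I1 x + x * I2 x <= C * x * Ms).
              { apply Rmult_le_reg_l with x; lra. }
              lra.
          - intros x Hxr. apply continuity_pt_filterlim.
            exact (ex_derive_continuous psi x (ex_intro _ _ (dpsi x (Hin x ltac:(lra))))). }
        match goal with Hq : psi t <= psi 0 |- _ => unfold psi in Hq; rename Hq into H1 end.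
        assert (t * I1 t <= C * t ^ 2 * Ms / 2) by lra.
        apply Rmult_le_reg_l with t; [lra|]. nra. }
      set (phi := fun s => M s - C * s ^ 2 * Ms / 4).
      assert (dphi : forall x, Rabs x < rho -> is_derive phi x (I1 x - C * x * Ms / 2)).
      { intros x Hxr. unfold phi. eapply is_derive_eq.
        * apply (is_derive_minus M (fun s => C * s ^ 2 * Ms / 4)).
          -- apply dM; auto.
          -- auto_derive; auto.
        * unfold minus, plus, opp, mult, one; simpl. match goal with |- ?a = ?b => change (@eq R a b) end. field. }
      assert (phi ts <= phi 0).
      { apply (nonincr phi (fun s => I1 s - C * s * Ms / 2)); try lra.
        - intros x Hxr. split.
          + apply dphi, Hin; lra.
          + assert (I1 x <= C * x * Ms / 2) by (apply BI; lra). lra.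
        - intros x Hxr. apply continuity_pt_filterlim.
          exact (ex_derive_continuous phi x (ex_intro _ _ (dphi x (Hin x ltac:(lra))))). }
      match goal with Hq : phi ts <= phi 0 |- _ => unfold phi in Hq; rename Hq into H1 end. rewrite M0 in H1. fold Ms in H1.
      assert (C * ts ^ 2 <= C * r0 ^ 2).
      { apply Rmult_le_compat_l; auto. apply pow_incr; lra. }
      nra. }
  exists r0. split; [lra|]. intros t th Ht Hth.
  assert (Mt0 : M t = 0).
  { assert (M t <= Ms) by (apply Hts; auto). assert (0 <= M t) by (apply Mpos, Hin; auto). lra. }
  apply (zero_int (polar Q x0 y0 t) 0 (2 * PI)); auto; try lra.
  - intros th'. apply cont_2d_1d_2. apply CD; auto.
  - intros th' _. destruct (in_box_polar x0 y0 rho t th' (Hin t Ht)) as [A B]. apply HL; auto.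
Qed.


Definition lvx (w1 w2 : R * R) (m k : Z) := IZR m * fst w1 + IZR k * fst w2.
Definition lvy (w1 w2 : R * R) (m k : Z) := IZR m * snd w1 + IZR k * snd w2.

Lemma le_refl w1 w2 a : lattice_equiv w1 w2 a a.
Proof. exists 0%Z, 0%Z. simpl. split; ring. Qed.

Lemma le_trans w1 w2 a b c : lattice_equiv w1 w2 a b -> lattice_equiv w1 w2 b c -> lattice_equiv w1 w2 a c.
Proof.
  intros [m [k [H1 H2]]] [m' [k' [H3 H4]]]. exists (m + m')%Z, (k + k')%Z.
  rewrite !plus_IZR. split; lra.
Qed.

Lemma le_sym w1 w2 a b : lattice_equiv w1 w2 a b -> lattice_equiv w1 w2 b a.
Proof.
  intros [m [k [H1 H2]]]. exists (- m)%Z, (- k)%Z. rewrite !opp_IZR. split; lra.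
Qed.

Lemma le_shift w1 w2 x y m k :
  lattice_equiv w1 w2 (x + lvx w1 w2 m k, y + lvy w1 w2 m k) (x, y).
Proof. exists m, k. unfold lvx, lvy; simpl. split; ring. Qed.

Lemma sing_shift w1 w2 ps x y m k :
  singular w1 w2 ps (x + lvx w1 w2 m k) (y + lvy w1 w2 m k) <-> singular w1 w2 ps x y.
Proof.
  split; intros [p [Hp He]]; exists p; split; auto.
  - eapply le_trans; [apply le_sym, le_shift| exact He].
  - eapply le_trans; [apply le_shift| exact He].
Qed.

Lemma per_nat w1 w2 ps (u : R -> R -> R) (a b : R) :
  (forall x y, singular w1 w2 ps (x + a) (y + b) <-> singular w1 w2 ps x y) ->
  (forall x y, ~ singular w1 w2 ps x y -> u (x + a) (y + b) = u x y) ->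
  forall n : nat, forall x y, ~ singular w1 w2 ps x y ->
    u (x + INR n * a) (y + INR n * b) = u x y.
Proof.
  intros Hs Hu n. induction n as [|n IH]; intros x y Hn.
  - simpl. rewrite !Rmult_0_l, !Rplus_0_r. auto.
  - rewrite S_INR.
    replace (x + (INR n + 1) * a) with ((x + INR n * a) + a) by ring.
    replace (y + (INR n + 1) * b) with ((y + INR n * b) + b) by ring.
    rewrite Hu; [apply IH; auto|].
    clear IH. induction n as [|n IH2].
    + simpl. rewrite !Rmult_0_l, !Rplus_0_r. auto.
    + rewrite S_INR.
      replace (x + (INR n + 1) * a) with ((x + INR n * a) + a) by ring.
      replace (y + (INR n + 1) * b) with ((y + INR n * b) + b) by ring.
      rewrite Hs. auto.
Qed.

Lemma per_Z w1 w2 ps (u : R -> R -> R) (a b : R) :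
  (forall x y, singular w1 w2 ps (x + a) (y + b) <-> singular w1 w2 ps x y) ->
  (forall x y, ~ singular w1 w2 ps x y -> u (x + a) (y + b) = u x y) ->
  forall m : Z, forall x y, ~ singular w1 w2 ps x y ->
    u (x + IZR m * a) (y + IZR m * b) = u x y.
Proof.
  intros Hs Hu m x y Hn.
  destruct (Z_le_gt_dec 0 m) as [Hm|Hm].
  - rewrite <- (Z2Nat.id m) by lia. rewrite <- INR_IZR_INZ. apply (per_nat w1 w2 ps); auto.
  - replace m with (- Z.of_nat (Z.to_nat (- m)))%Z by lia.
    rewrite opp_IZR, <- INR_IZR_INZ. set (n := Z.to_nat (- m)).
    assert (Hs' : forall x y, singular w1 w2 ps (x + - a) (y + - b) <-> singular w1 w2 ps x y).
    { intros x' y'. rewrite <- (Hs (x' + - a) (y' + - b)).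
      replace (x' + - a + a) with x' by ring. replace (y' + - b + b) with y' by ring. tauto. }
    assert (Hu' : forall x y, ~ singular w1 w2 ps x y -> u (x + - a) (y + - b) = u x y).
    { intros x' y' Hn'. rewrite <- (Hu (x' + - a) (y' + - b)).
      - replace (x' + - a + a) with x' by ring. replace (y' + - b + b) with y' by ring. auto.
      - rewrite Hs'. auto. }
    pose proof (per_nat w1 w2 ps u (- a) (- b) Hs' Hu' n x y Hn).
    replace (x + - INR n * a) with (x + INR n * - a) by ring.
    replace (y + - INR n * b) with (y + INR n * - b) by ring. auto.
Qed.

Lemma periodic w1 w2 ps lam u : is_solution w1 w2 ps lam u ->
  forall m k x y, ~ singular w1 w2 ps x y ->
    u (x + lvx w1 w2 m k) (y + lvy w1 w2 m k) = u x y.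
Proof.
  intros [Hper _] m k x y Hn.
  assert (S1 : forall x y, singular w1 w2 ps (x + fst w1) (y + snd w1) <-> singular w1 w2 ps x y).
  { intros. pose proof (sing_shift w1 w2 ps x0 y0 1 0). unfold lvx, lvy in H.
    replace (IZR 1 * fst w1 + IZR 0 * fst w2) with (fst w1) in H by (simpl; ring).
    replace (IZR 1 * snd w1 + IZR 0 * snd w2) with (snd w1) in H by (simpl; ring). auto. }
  assert (S2 : forall x y, singular w1 w2 ps (x + fst w2) (y + snd w2) <-> singular w1 w2 ps x y).
  { intros. pose proof (sing_shift w1 w2 ps x0 y0 0 1). unfold lvx, lvy in H.
    replace (IZR 0 * fst w1 + IZR 1 * fst w2) with (fst w2) in H by (simpl; ring).
    replace (IZR 0 * snd w1 + IZR 1 * snd w2) with (snd w2) in H by (simpl; ring). auto. }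
  unfold lvx, lvy.
  replace (x + (IZR m * fst w1 + IZR k * fst w2)) with ((x + IZR k * fst w2) + IZR m * fst w1) by ring.
  replace (y + (IZR m * snd w1 + IZR k * snd w2)) with ((y + IZR k * snd w2) + IZR m * snd w1) by ring.
  rewrite (per_Z w1 w2 ps u (fst w1) (snd w1) S1 (fun x y H => proj1 (Hper x y H))).
  - apply (per_Z w1 w2 ps u (fst w2) (snd w2) S2 (fun x y H => proj2 (Hper x y H))); auto.
  - pose proof (sing_shift w1 w2 ps x y 0 k). unfold lvx, lvy in H.
    replace (IZR 0 * fst w1 + IZR k * fst w2) with (IZR k * fst w2) in H by (simpl; ring).
    replace (IZR 0 * snd w1 + IZR k * snd w2) with (IZR k * snd w2) in H by (simpl; ring).
    rewrite H; auto.
Qed.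

Lemma IZR_small (m : Z) : Rabs (IZR m) < 1 -> m = 0%Z.
Proof.
  intros H. apply Rabs_def2 in H. destruct H as [H1 H2].
  change 1 with (IZR 1) in H1, H2. rewrite <- opp_IZR in H2.
  apply lt_IZR in H1. apply lt_IZR in H2. lia.
Qed.

Definition Bw (w1 w2 : R * R) := Rabs (fst w1) + Rabs (fst w2) + Rabs (snd w1) + Rabs (snd w2).

Lemma Bw_pos w1 w2 : 0 <= Bw w1 w2.
Proof. unfold Bw. pose proof (Rabs_pos (fst w1)). pose proof (Rabs_pos (fst w2)).
  pose proof (Rabs_pos (snd w1)). pose proof (Rabs_pos (snd w2)). lra. Qed.

Lemma discrete w1 w2 : fst w1 * snd w2 - snd w1 * fst w2 <> 0 ->
  exists kap, 0 < kap /\ forall m k, Rabs (lvx w1 w2 m k) < kap -> Rabs (lvy w1 w2 m k) < kap ->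
    m = 0%Z /\ k = 0%Z.
Proof.
  intros HD. set (D := fst w1 * snd w2 - snd w1 * fst w2) in *.
  assert (HaD : 0 < Rabs D) by (apply Rabs_pos_lt; auto).
  pose proof (Bw_pos w1 w2).
  exists (Rabs D / (1 + Bw w1 w2)). split.
  { apply Rdiv_lt_0_compat; lra. }
  intros m k Hx Hy. unfold lvx, lvy in *.
  set (vx := IZR m * fst w1 + IZR k * fst w2) in *.
  set (vy := IZR m * snd w1 + IZR k * snd w2) in *.
  assert (Em : IZR m * D = vx * snd w2 - vy * fst w2) by (unfold vx, vy, D; ring).
  assert (Ek : IZR k * D = fst w1 * vy - snd w1 * vx) by (unfold vx, vy, D; ring).
  set (kap := Rabs D / (1 + Bw w1 w2)) in *.
  assert (Hk : kap * (1 + Bw w1 w2) = Rabs D) by (unfold kap; field; lra).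
  unfold Bw in *.
  pose proof (Rabs_pos (fst w1)). pose proof (Rabs_pos (fst w2)).
  pose proof (Rabs_pos (snd w1)). pose proof (Rabs_pos (snd w2)).
  pose proof (Rabs_pos vx). pose proof (Rabs_pos vy).
  split; apply IZR_small.
  - assert (A : Rabs (IZR m) * Rabs D <= Rabs vx * Rabs (snd w2) + Rabs vy * Rabs (fst w2)).
    { rewrite <- Rabs_mult, Em, <- !Rabs_mult.
      replace (vx * snd w2 - vy * fst w2) with (vx * snd w2 + - (vy * fst w2)) by ring.
      eapply Rle_trans; [apply Rabs_triang| rewrite Rabs_Ropp; lra]. }
    assert (Rabs vx * Rabs (snd w2) + Rabs vy * Rabs (fst w2) < Rabs D).
    { rewrite <- Hk. nra. }
    nra.
  - assert (A : Rabs (IZR k) * Rabs D <= Rabs (fst w1) * Rabs vy + Rabs (snd w1) * Rabs vx).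
    { rewrite <- Rabs_mult, Ek, <- !Rabs_mult.
      replace (fst w1 * vy - snd w1 * vx) with (fst w1 * vy + - (snd w1 * vx)) by ring.
      eapply Rle_trans; [apply Rabs_triang| rewrite Rabs_Ropp; lra]. }
    assert (Rabs (fst w1) * Rabs vy + Rabs (snd w1) * Rabs vx < Rabs D).
    { rewrite <- Hk. nra. }
    nra.
Qed.

Lemma frac_part (a : R) : exists m : Z, 0 <= a - IZR m < 1.
Proof.
  exists (up a - 1)%Z. rewrite minus_IZR. destruct (archimed a). simpl. lra.
Qed.

Lemma box_rep w1 w2 x y : fst w1 * snd w2 - snd w1 * fst w2 <> 0 ->
  exists m k, Rabs (x - lvx w1 w2 m k) <= Bw w1 w2 /\ Rabs (y - lvy w1 w2 m k) <= Bw w1 w2.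
Proof.
  intros HD. set (D := fst w1 * snd w2 - snd w1 * fst w2) in *.
  set (a := (x * snd w2 - y * fst w2) / D). set (b := (fst w1 * y - snd w1 * x) / D).
  assert (Ex : x = a * fst w1 + b * fst w2) by (unfold a, b, D in *; field; auto).
  assert (Ey : y = a * snd w1 + b * snd w2) by (unfold a, b, D in *; field; auto).
  destruct (frac_part a) as [m Hm]. destruct (frac_part b) as [k Hk].
  exists m, k. unfold lvx, lvy, Bw.
  pose proof (Rabs_pos (fst w1)). pose proof (Rabs_pos (fst w2)).
  pose proof (Rabs_pos (snd w1)). pose proof (Rabs_pos (snd w2)).
  split.
  - replace (x - (IZR m * fst w1 + IZR k * fst w2)) with ((a - IZR m) * fst w1 + (b - IZR k) * fst w2)
      by (rewrite Ex; ring).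
    eapply Rle_trans; [apply Rabs_triang|]. rewrite !Rabs_mult.
    rewrite (Rabs_pos_eq (a - IZR m)), (Rabs_pos_eq (b - IZR k)) by lra. nra.
  - replace (y - (IZR m * snd w1 + IZR k * snd w2)) with ((a - IZR m) * snd w1 + (b - IZR k) * snd w2)
      by (rewrite Ey; ring).
    eapply Rle_trans; [apply Rabs_triang|]. rewrite !Rabs_mult.
    rewrite (Rabs_pos_eq (a - IZR m)), (Rabs_pos_eq (b - IZR k)) by lra. nra.
Qed.

Lemma list_min {A} (l : list A) (P : A -> R -> Prop) :
  (forall a d d', P a d -> 0 < d' <= d -> P a d') ->
  (forall a, In a l -> exists d, 0 < d /\ P a d) ->
  exists d, 0 < d /\ forall a, In a l -> P a d.
Proof.
  intros Hm. induction l as [|a l IH]; intros H.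
  - exists 1. split; [lra| intros a []].
  - destruct (H a (or_introl eq_refl)) as [d1 [Hd1 P1]].
    destruct IH as [d2 [Hd2 P2]]. { intros b Hb. apply H. right; auto. }
    exists (Rmin d1 d2). split. { apply Rmin_pos; auto. }
    intros b [Hb|Hb].
    + subst b. apply (Hm a d1); auto. split; [apply Rmin_pos; auto| apply Rmin_l].
    + apply (Hm b d2); auto. split; [apply Rmin_pos; auto| apply Rmin_r].
Qed.

Lemma open_single w1 w2 p x0 y0 : fst w1 * snd w2 - snd w1 * fst w2 <> 0 ->
  ~ lattice_equiv w1 w2 (x0, y0) p ->
  exists d, 0 < d /\ forall x y, Rabs (x - x0) < d -> Rabs (y - y0) < d -> ~ lattice_equiv w1 w2 (x, y) p.
Proof.
  intros HD Hn. destruct (discrete w1 w2 HD) as [kap [Hk Hdisc]].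
  destruct (classic (exists x1 y1, Rabs (x1 - x0) < kap / 2 /\ Rabs (y1 - y0) < kap / 2 /\
                      lattice_equiv w1 w2 (x1, y1) p)) as [[x1 [y1 [H1 [H2 H3]]]]|Hno].
  - assert (Hne : 0 < Rmax (Rabs (x1 - x0)) (Rabs (y1 - y0))).
    { destruct (Req_dec x1 x0) as [->|Hx].
      - destruct (Req_dec y1 y0) as [->|Hy]; [contradiction|].
        eapply Rlt_le_trans; [| apply Rmax_r]. apply Rabs_pos_lt. lra.
      - eapply Rlt_le_trans; [| apply Rmax_l]. apply Rabs_pos_lt. lra. }
    exists (Rmin (kap / 2) (Rmax (Rabs (x1 - x0)) (Rabs (y1 - y0)))). split.
    { apply Rmin_pos; lra. }
    intros x y Hx Hy He.
    assert (Hx' := Rlt_le_trans _ _ _ Hx (Rmin_l _ _)).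
    assert (Hy' := Rlt_le_trans _ _ _ Hy (Rmin_l _ _)).
    assert (Hx2 := Rlt_le_trans _ _ _ Hx (Rmin_r _ _)).
    assert (Hy2 := Rlt_le_trans _ _ _ Hy (Rmin_r _ _)).
    destruct (le_trans w1 w2 _ _ _ He (le_sym w1 w2 _ _ H3)) as [m [k [E1 E2]]]. simpl in E1, E2.
    assert (Hmk : m = 0%Z /\ k = 0%Z).
    { apply Hdisc; unfold lvx, lvy; rewrite <- ?E1, <- ?E2.
      - replace (x - x1) with ((x - x0) - (x1 - x0)) by ring.
        eapply Rle_lt_trans; [apply Rabs_triang| rewrite Rabs_Ropp; lra].
      - replace (y - y1) with ((y - y0) - (y1 - y0)) by ring.
        eapply Rle_lt_trans; [apply Rabs_triang| rewrite Rabs_Ropp; lra]. }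
    destruct Hmk as [-> ->]. simpl in E1, E2.
    assert (x = x1) by lra. assert (y = y1) by lra. subst.
    revert Hx2 Hy2. unfold Rmax. destruct Rle_dec; lra.
  - exists (kap / 2). split; [lra|]. intros x y Hx Hy He. apply Hno. exists x, y. auto.
Qed.

Lemma open_NS w1 w2 ps x0 y0 : fst w1 * snd w2 - snd w1 * fst w2 <> 0 ->
  ~ singular w1 w2 ps x0 y0 ->
  exists d, 0 < d /\ forall x y, Rabs (x - x0) < d -> Rabs (y - y0) < d -> ~ singular w1 w2 ps x y.
Proof.
  intros HD Hn.
  destruct (list_min ps (fun p d => forall x y, Rabs (x - x0) < d -> Rabs (y - y0) < d ->
                ~ lattice_equiv w1 w2 (x, y) p)) as [d [Hd Hp]].
  - intros a d d' H [H1 H2] x y Hx Hy. apply H; lra.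
  - intros a Ha. apply open_single; auto. intros He. apply Hn. exists a. auto.
  - exists d. split; auto. intros x y Hx Hy [p [Hin He]]. apply (Hp p Hin x y Hx Hy He).
Qed.

Lemma pow_eq_zero_R (a : R) : a ^ 2 = 0 -> a = 0.
Proof. intros H. destruct (Req_dec a 0); auto. exfalso. assert (0 < a ^ 2) by (apply pow2_gt_0; auto). lra. Qed.

Lemma mult_pos w1 w2 ps p : In p ps -> 1 <= INR (multiplicity w1 w2 ps p).
Proof.
  intros Hin. unfold multiplicity.
  set (f := fun p0 => if excluded_middle_informative (lattice_equiv w1 w2 p0 p) then true else false).
  assert (Hf : In p (filter f ps)).
  { apply filter_In. split; auto. unfold f. destruct excluded_middle_informative; auto.
    exfalso; apply n, le_refl. }
  destruct (filter f ps) as [|a l]; [destruct Hf|]. simpl length. rewrite S_INR.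
  pose proof (pos_INR (length l)). lra.
Qed.

Lemma near_sing w1 w2 ps lam u qx qy A : is_solution w1 w2 ps lam u ->
  singular w1 w2 ps qx qy ->
  exists d, 0 < d /\ forall x y, Rabs (x - qx) < d -> Rabs (y - qy) < d ->
    ~ singular w1 w2 ps x y -> u x y < A.
Proof.
  intros Hsol [p [Hin [m [k [E1 E2]]]]]. simpl in E1, E2.
  pose proof Hsol as [_ [_ [_ Hloc]]].
  destruct (Hloc p Hin) as [r [f [Hr [Hsm Heq]]]].
  destruct p as [px py]; simpl in E1, E2.
  assert (Hc : continuity_2d_pt f px py).
  { apply (Hsm nil). assert (0 < r ^ 2) by (apply pow_lt; auto).
    unfold dist_sq; cbn [fst snd]. replace ((px - px) ^ 2 + (py - py) ^ 2) with 0 by ring. lra. }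
  destruct (Hc (mkposreal 1 Rlt_0_1)) as [df Hdf]. simpl in Hdf.
  set (n := INR (multiplicity w1 w2 ps (px, py))).
  assert (Hn : 1 <= n) by (apply mult_pos; auto).
  set (e0 := exp (A - Rabs (f px py) - 1)).
  assert (He0 : 0 < e0) by apply exp_pos.
  set (m0 := Rmin e0 (Rmin 1 (r ^ 2))).
  assert (Hm0 : 0 < m0 /\ m0 <= e0 /\ m0 <= 1 /\ m0 <= r ^ 2).
  { unfold m0. assert (0 < r ^ 2) by (apply pow_lt; auto).
    unfold Rmin; repeat destruct Rle_dec; lra. }
  set (d := Rmin df (Rmin 1 (m0 / 2))).
  assert (Hd : 0 < d /\ d <= df /\ d <= 1 /\ d <= m0 / 2).
  { unfold d. pose proof (cond_pos df). unfold Rmin; repeat destruct Rle_dec; lra. }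
  exists d. split; [lra|]. intros x y Hx Hy Hns.
  set (wx := x - lvx w1 w2 m k). set (wy := y - lvy w1 w2 m k).
  assert (Hw : ~ singular w1 w2 ps wx wy).
  { intros Hs. apply Hns. rewrite <- (sing_shift w1 w2 ps wx wy m k) in Hs.
    unfold wx, wy in Hs. replace (x - lvx w1 w2 m k + lvx w1 w2 m k) with x in Hs by ring.
    replace (y - lvy w1 w2 m k + lvy w1 w2 m k) with y in Hs by ring. auto. }
  assert (Hu : u x y = u wx wy).
  { rewrite <- (periodic w1 w2 ps lam u Hsol m k wx wy Hw). unfold wx, wy. f_equal; ring. }
  assert (Ex : wx - px = x - qx) by (unfold wx, lvx; lra).
  assert (Ey : wy - py = y - qy) by (unfold wy, lvy; lra).
  set (d2 := dist_sq wx wy (px, py)).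
  assert (Ed2 : d2 = (x - qx) ^ 2 + (y - qy) ^ 2) by (unfold d2, dist_sq; simpl; rewrite Ex, Ey; ring).
  assert (Hd2pos : 0 < d2).
  { assert (H0d : 0 <= d2) by (rewrite Ed2; pose proof (pow2_ge_0 (x - qx)); pose proof (pow2_ge_0 (y - qy)); lra).
    destruct (Rle_lt_or_eq_dec 0 d2 H0d) as [|E]; auto.
    exfalso. apply Hw. exists (px, py). split; auto.
    pose proof (pow2_ge_0 (x - qx)); pose proof (pow2_ge_0 (y - qy)).
    assert (Hx0 : (x - qx) ^ 2 = 0) by (apply Rle_antisym; lra).
    assert (Hy0 : (y - qy) ^ 2 = 0) by (apply Rle_antisym; lra).
    apply pow_eq_zero_R in Hx0. apply pow_eq_zero_R in Hy0.
    assert (Ewx : wx = px) by lra. assert (Ewy : wy = py) by lra. rewrite Ewx, Ewy. apply le_refl. }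
  assert (Hd2b : d2 < m0).
  { rewrite Ed2. apply Rabs_def2 in Hx. apply Rabs_def2 in Hy.
    assert ((x - qx) ^ 2 < d ^ 2) by nra. assert ((y - qy) ^ 2 < d ^ 2) by nra. nra. }
  assert (Hdd : 0 < dist_sq wx wy (px, py) < r ^ 2) by (fold d2; lra).
  rewrite Hu, (Heq wx wy Hdd).
  fold d2 n.
  assert (Hf1 : Rabs (f wx wy - f px py) < 1).
  { apply Hdf; rewrite ?Ex, ?Ey; lra. }
  assert (Hln1 : ln d2 < ln e0) by (apply ln_increasing; lra).
  unfold e0 in Hln1. rewrite ln_exp in Hln1.
  assert (Hln0 : ln d2 < 0) by (rewrite <- ln_1; apply ln_increasing; lra).
  apply Rabs_def2 in Hf1. pose proof (Rle_abs (f px py)).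
  nra.
Qed.


Lemma Rabs_le_inv a B : Rabs a <= B -> - B <= a <= B.
Proof. unfold Rabs; destruct Rcase_abs; lra. Qed.

Definition inbox B (x y : R) := Rabs x <= B /\ Rabs y <= B.

Lemma cover B (Q : R -> R -> R -> R -> Prop) :
  (forall t1 t2, inbox B t1 t2 -> exists d : posreal, forall x y,
      Rabs (x - t1) < d -> Rabs (y - t2) < d -> Q t1 t2 x y) ->
  exists l : list (R * R),
    forall x y, inbox B x y -> exists t, In t l /\ inbox B (fst t) (snd t) /\ Q (fst t) (snd t) x y.
Proof.
  intros HQ.
  assert (Hex : forall t : Compactness.Tn 2 R, exists d : posreal,
     forall t1 t2, t = (t1, (t2, tt)) -> inbox B t1 t2 -> forall x y,
       Rabs (x - t1) < d -> Rabs (y - t2) < d -> Q t1 t2 x y).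
  { intros [t1 [t2 []]].
    destruct (classic (inbox B t1 t2)) as [Hin|Hno].
    - destruct (HQ t1 t2 Hin) as [d Hd]. exists d. intros a b E _. inversion E; subst. auto.
    - exists (mkposreal 1 Rlt_0_1). intros a b E Hin. inversion E; subst. contradiction. }
  set (delta := fun t => proj1_sig (constructive_indefinite_description _ (Hex t))).
  assert (Hdelta : forall t, forall t1 t2, t = (t1, (t2, tt)) -> inbox B t1 t2 -> forall x y,
       Rabs (x - t1) < delta t -> Rabs (y - t2) < delta t -> Q t1 t2 x y).
  { intros t. unfold delta. destruct (constructive_indefinite_description _ (Hex t)) as [d Hd]. exact Hd. }
  pose proof (compactness_list 2 (- B, (- B, tt)) (B, (B, tt)) delta) as HL.
  apply NNPP in HL. destruct HL as [l Hl].
  exists (map (fun t : Compactness.Tn 2 R => match t with (a, (b, _)) => (a, b) end) l).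
  intros x y Hxy.
  destruct (Hl (x, (y, tt))) as [[a [b []]] [Hin [Hb Hc]]].
  { simpl. unfold inbox in Hxy. destruct Hxy as [H1 H2].
    apply Rabs_le_inv in H1. apply Rabs_le_inv in H2. tauto. }
  exists (a, b). simpl in Hb, Hc. simpl.
  assert (Hab : inbox B a b) by (destruct Hb as [Hb1 [Hb2 _]]; split; apply Rabs_le; lra).
  split; [| split; auto].
  - apply in_map_iff. exists (a, (b, tt)). auto.
  - apply (Hdelta (a, (b, tt)) a b eq_refl Hab).
    + destruct Hc as [Hc1 [Hc2 _]]; auto.
    + destruct Hc as [Hc1 [Hc2 _]]; auto.
Qed.

Lemma list_max_lt (l : list (R * R)) (P : R * R -> Prop) (F : R * R -> R) S :
  (forall t, In t l -> P t -> F t < S) ->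
  exists M, M < S /\ forall t, In t l -> P t -> F t <= M.
Proof.
  induction l as [|a l IH]; intros H.
  - exists (S - 1). split; [lra| intros t []].
  - destruct IH as [M [HM HM2]]. { intros t Ht. apply H. right; auto. }
    destruct (classic (P a)) as [Pa|nPa].
    + assert (F a < S) by (apply H; [left|]; auto).
      exists (Rmax M (F a)). split. { unfold Rmax; destruct Rle_dec; lra. }
      intros t [E|Ht] Pt.
      * subst. apply Rmax_r.
      * eapply Rle_trans; [apply HM2; auto| apply Rmax_l].
    + exists M. split; auto. intros t [E|Ht] Pt.
      * subst. contradiction.
      * apply HM2; auto.
Qed.

Lemma evt2 (h : R -> R -> R) B : 0 <= B -> (forall x y, continuity_2d_pt h x y) ->
  exists x0 y0, inbox B x0 y0 /\ forall x y, inbox B x y -> h x y <= h x0 y0.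
Proof.
  intros HB Hc.
  destruct (cover B (fun t1 t2 x y => h x y < h t1 t2 + 1)) as [l1 Hl1].
  { intros t1 t2 _. destruct (Hc t1 t2 (mkposreal 1 Rlt_0_1)) as [d Hd].
    exists d. intros x y Hx Hy. specialize (Hd x y Hx Hy). simpl in Hd.
    apply Rabs_def2 in Hd. lra. }
  destruct (list_max_lt l1 (fun t => inbox B (fst t) (snd t)) (fun t => h (fst t) (snd t))
             (1 + fold_right (fun t m => Rmax (Rabs (h (fst t) (snd t))) m) 0 l1)) as [M1 [_ HM1]].
  { intros t Ht _. clear Hl1. induction l1 as [|a l IH]; [destruct Ht|].
    simpl. destruct Ht as [E|Ht].
    - subst. pose proof (Rle_abs (h (fst t) (snd t))).
      pose proof (Rmax_l (Rabs (h (fst t) (snd t))) (fold_right (fun t m => Rmax (Rabs (h (fst t) (snd t))) m) 0 l)). lra.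
    - specialize (IH Ht).
      pose proof (Rmax_r (Rabs (h (fst a) (snd a))) (fold_right (fun t m => Rmax (Rabs (h (fst t) (snd t))) m) 0 l)). lra. }
  set (E := fun z => exists x y, inbox B x y /\ z = h x y).
  assert (Hbound : bound E).
  { exists (M1 + 1). intros z [x [y [Hin ->]]].
    destruct (Hl1 x y Hin) as [t [Ht [Htb Hq]]]. specialize (HM1 t Ht Htb). lra. }
  assert (Hne : exists z, E z).
  { exists (h 0 0). exists 0, 0. split; auto. unfold inbox. rewrite Rabs_R0. lra. }
  destruct (completeness E Hbound Hne) as [S [HS1 HS2]].
  destruct (classic (exists x0 y0, inbox B x0 y0 /\ S <= h x0 y0)) as [[x0 [y0 [Hin HS]]]|Hno].
  - exists x0, y0. split; auto. intros x y Hxy.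
    assert (h x y <= S) by (apply HS1; exists x, y; auto). lra.
  - exfalso.
    assert (Hlt : forall x y, inbox B x y -> h x y < S).
    { intros x y Hxy. destruct (Rlt_le_dec (h x y) S); auto. exfalso. apply Hno. exists x, y; auto. }
    destruct (cover B (fun t1 t2 x y => h x y < (h t1 t2 + S) / 2)) as [l2 Hl2].
    { intros t1 t2 Ht. assert (Hp : 0 < (S - h t1 t2) / 2) by (specialize (Hlt t1 t2 Ht); lra).
      destruct (Hc t1 t2 (mkposreal _ Hp)) as [d Hd].
      exists d. intros x y Hx Hy. specialize (Hd x y Hx Hy). simpl in Hd.
      apply Rabs_def2 in Hd. lra. }
    destruct (list_max_lt l2 (fun t => inbox B (fst t) (snd t)) (fun t => h (fst t) (snd t)) S)
      as [M2 [HM2 HM2']].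
    { intros t _ Ht. apply Hlt; auto. }
    assert (S <= (M2 + S) / 2).
    { apply HS2. intros z [x [y [Hin ->]]].
      destruct (Hl2 x y Hin) as [t [Ht [Htb Hq]]]. specialize (HM2' t Ht Htb). lra. }
    lra.
Qed.


Lemma Rmax_lip a b c : Rabs (Rmax a c - Rmax b c) <= Rabs (a - b).
Proof. unfold Rmax; repeat destruct Rle_dec; unfold Rabs; repeat destruct Rcase_abs; lra. Qed.

Lemma u_cont w1 w2 ps lam u x y : is_solution w1 w2 ps lam u -> ~ singular w1 w2 ps x y ->
  continuity_2d_pt u x y.
Proof. intros [_ [Hs _]] Hn. apply (Hs nil x y Hn). Qed.

Definition hcl w1 w2 ps (u : R -> R -> R) A x y :=
  if excluded_middle_informative (singular w1 w2 ps x y) then A else Rmax (u x y) A.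

Lemma hcl_cont w1 w2 ps lam u A x y : fst w1 * snd w2 - snd w1 * fst w2 <> 0 ->
  is_solution w1 w2 ps lam u -> continuity_2d_pt (hcl w1 w2 ps u A) x y.
Proof.
  intros HD Hsol eps.
  destruct (classic (singular w1 w2 ps x y)) as [Hs|Hn].
  - destruct (near_sing w1 w2 ps lam u x y A Hsol Hs) as [d [Hd Hd2]].
    exists (mkposreal d Hd). simpl. intros a b Ha Hb.
    unfold hcl. destruct (excluded_middle_informative (singular w1 w2 ps x y)) as [_|]; [|contradiction].
    destruct (excluded_middle_informative (singular w1 w2 ps a b)) as [_|Hn'].
    + rewrite Rminus_diag, Rabs_R0. apply cond_pos.
    + specialize (Hd2 a b Ha Hb Hn'). rewrite Rmax_right by lra.
      rewrite Rminus_diag, Rabs_R0. apply cond_pos.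
  - destruct (open_NS w1 w2 ps x y HD Hn) as [d1 [Hd1 Ho]].
    destruct (u_cont w1 w2 ps lam u x y Hsol Hn eps) as [d2 Hd2].
    assert (Hm : 0 < Rmin d1 d2) by (apply Rmin_pos; auto; apply cond_pos).
    exists (mkposreal _ Hm). simpl. intros a b Ha Hb.
    assert (Ha1 := Rlt_le_trans _ _ _ Ha (Rmin_l _ _)).
    assert (Hb1 := Rlt_le_trans _ _ _ Hb (Rmin_l _ _)).
    assert (Ha2 := Rlt_le_trans _ _ _ Ha (Rmin_r _ _)).
    assert (Hb2 := Rlt_le_trans _ _ _ Hb (Rmin_r _ _)).
    unfold hcl. destruct (excluded_middle_informative (singular w1 w2 ps a b)) as [Hs|_].
    { exfalso. apply (Ho a b); auto. }
    destruct (excluded_middle_informative (singular w1 w2 ps x y)) as [Hs|_]; [contradiction|].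
    eapply Rle_lt_trans; [apply Rmax_lip| apply Hd2; auto].
Qed.

Lemma hcl_per w1 w2 ps lam u A x y m k : is_solution w1 w2 ps lam u ->
  hcl w1 w2 ps u A (x + lvx w1 w2 m k) (y + lvy w1 w2 m k) = hcl w1 w2 ps u A x y.
Proof.
  intros Hsol. unfold hcl.
  destruct excluded_middle_informative as [H1|H1];
  destruct excluded_middle_informative as [H2|H2]; auto.
  - exfalso. apply H2. apply (sing_shift w1 w2 ps x y m k). auto.
  - exfalso. apply H1. apply (sing_shift w1 w2 ps x y m k). auto.
  - rewrite (periodic w1 w2 ps lam u Hsol m k x y H2). auto.
Qed.

Lemma exists_max w1 w2 ps lam u x1 y1 : fst w1 * snd w2 - snd w1 * fst w2 <> 0 ->
  is_solution w1 w2 ps lam u -> ~ singular w1 w2 ps x1 y1 ->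
  exists x0 y0, ~ singular w1 w2 ps x0 y0 /\ u x1 y1 <= u x0 y0 /\
    forall x y, ~ singular w1 w2 ps x y -> u x y <= u x0 y0.
Proof.
  intros HD Hsol Hn1.
  set (A := u x1 y1). set (h := hcl w1 w2 ps u A).
  destruct (evt2 h (Bw w1 w2) (Bw_pos w1 w2)) as [t1 [t2 [Ht Hmax]]].
  { intros; apply (hcl_cont w1 w2 ps lam u A x y HD Hsol). }
  assert (Hglob : forall x y, h x y <= h t1 t2).
  { intros x y. unfold h. destruct (box_rep w1 w2 x y HD) as [m [k [Bx By]]].
    replace (hcl w1 w2 ps u A x y) with (hcl w1 w2 ps u A (x - lvx w1 w2 m k + lvx w1 w2 m k)
       (y - lvy w1 w2 m k + lvy w1 w2 m k)) by (f_equal; ring).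
    rewrite (hcl_per w1 w2 ps lam u A (x - lvx w1 w2 m k) (y - lvy w1 w2 m k) m k Hsol).
    apply Hmax. split; auto. }
  assert (Hu_le : forall x y, ~ singular w1 w2 ps x y -> u x y <= h x y).
  { intros x y Hn. unfold h, hcl. destruct excluded_middle_informative; [contradiction|]. apply Rmax_l. }
  assert (HA : A <= h t1 t2).
  { eapply Rle_trans; [| apply (Hglob x1 y1)]. unfold h, hcl.
    destruct excluded_middle_informative; [contradiction|]. apply Rmax_r. }
  destruct (classic (~ singular w1 w2 ps t1 t2 /\ A < u t1 t2)) as [[Hn Hlt]|Hno].
  - exists t1, t2. split; auto. split; [lra|].
    intros x y Hn'. eapply Rle_trans; [apply Hu_le; auto|].
    eapply Rle_trans; [apply Hglob|]. unfold h, hcl.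
    destruct excluded_middle_informative; [contradiction|]. rewrite Rmax_left; lra.
  - assert (Eh : h t1 t2 = A).
    { unfold h, hcl. destruct excluded_middle_informative; auto.
      rewrite Rmax_right; auto. destruct (Rle_lt_dec (u t1 t2) A); auto. exfalso. apply Hno; auto. }
    exists x1, y1. split; auto. split; [apply Rle_refl|].
    intros x y Hn'. eapply Rle_trans; [apply Hu_le; auto|]. fold A. rewrite <- Eh. apply Hglob.
Qed.


Lemma pos_max_absurd w1 w2 ps lam u x0 y0 : fst w1 * snd w2 - snd w1 * fst w2 <> 0 ->
  0 < lam -> is_solution w1 w2 ps lam u -> ~ singular w1 w2 ps x0 y0 ->
  (forall x y, ~ singular w1 w2 ps x y -> u x y <= u x0 y0) -> 0 < u x0 y0 -> False.
Proof.
  intros HD Hlam Hsol Hn Hmax Hpos.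
  pose proof Hsol as [_ [Hsm [Heq _]]].
  destruct (open_NS w1 w2 ps x0 y0 HD Hn) as [d [Hd Ho]].
  assert (Z : Rabs 0 < d) by (rewrite Rabs_R0; lra).
  destruct (max_1d (fun t => u t y0) x0 d Hd) as [Dx DDx].
  { intros t Ht. apply Hmax. apply Ho; auto. rewrite Rminus_diag; auto. }
  { intros t Ht. exact (proj1 (proj2 (Hsm nil t y0 (Ho t y0 Ht ltac:(rewrite Rminus_diag; auto))))). }
  { exact (proj1 (proj2 (Hsm (true :: nil) x0 y0 Hn))). }
  destruct (max_1d (fun t => u x0 t) y0 d Hd) as [Dy DDy].
  { intros t Ht. apply Hmax. apply Ho; auto. rewrite Rminus_diag; auto. }
  { intros t Ht. exact (proj2 (proj2 (Hsm nil x0 t (Ho x0 t ltac:(rewrite Rminus_diag; auto) Ht)))). }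
  { exact (proj2 (proj2 (Hsm (false :: nil) x0 y0 Hn))). }
  specialize (Heq x0 y0 Hn). unfold laplacian, grad_sq, partial1, partial2 in Heq.
  rewrite Dx, Dy in Heq.
  set (e := exp (u x0 y0)) in *.
  assert (He : 1 < e) by (unfold e; rewrite <- exp_0; apply exp_increasing; auto).
  assert (HL1 : Derive (fun x => Derive (fun t => u t y0) x) x0 <= 0) by exact DDx.
  assert (HL2 : Derive (fun y => Derive (fun t => u x0 t) y) y0 <= 0) by exact DDy.
  assert (0 < lam * e * (e - 1) ^ 2).
  { apply Rmult_lt_0_compat; [apply Rmult_lt_0_compat; lra| apply pow_lt; lra]. }
  set (L := Derive (fun x => Derive (fun t => u t y0) x) x0 + Derive (fun y => Derive (fun t => u x0 t) y) y0) in *.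
  assert (0 <= (1 - e) * L).
  { replace ((1 - e) * L) with ((e - 1) * (- L)) by ring. apply Rmult_le_pos; unfold L; lra. }
  match goal with H : _ |- _ => idtac end.
  replace (0 ^ 2 + 0 ^ 2) with 0 in Heq by ring.
  lra.
Qed.


Lemma dH0 (a : R -> R) x a' : is_derive a x a' ->
  is_derive (fun t => (1 - exp (a t)) ^ 2) x (2 * (exp (a x) ^ 2 - exp (a x)) * a').
Proof.
  intros Ha.
  assert (He : is_derive (fun t => exp (a t)) x (a' * exp (a x))).
  { apply (is_derive_comp exp a x (exp (a x)) a'); [apply is_derive_exp| exact Ha]. }
  eapply is_derive_eq.
  - apply (is_derive_pow (fun t => 1 - exp (a t)) 2 x (- (a' * exp (a x)))).
    eapply is_derive_eq.
    + apply (is_derive_minus (fun _ => 1) (fun t => exp (a t))); [apply is_derive_const| exact He].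
    + unfold minus, zero, plus, opp; simpl. match goal with |- ?a = ?b => change (@eq R a b) end. ring.
  - simpl. ring.
Qed.

Lemma dH1 (a b : R -> R) x a' b' : is_derive a x a' -> is_derive b x b' ->
  is_derive (fun t => 2 * (exp (a t) ^ 2 - exp (a t)) * b t) x
    (2 * (2 * exp (a x) ^ 2 - exp (a x)) * a' * b x + 2 * (exp (a x) ^ 2 - exp (a x)) * b').
Proof.
  intros Ha Hb.
  assert (He : is_derive (fun t => exp (a t)) x (a' * exp (a x))).
  { apply (is_derive_comp exp a x (exp (a x)) a'); [apply is_derive_exp| exact Ha]. }
  assert (He2 : is_derive (fun t => exp (a t) ^ 2) x (2 * (a' * exp (a x)) * exp (a x))).
  { eapply is_derive_eq; [apply (is_derive_pow (fun t => exp (a t)) 2 x _ He)|]. simpl. ring. }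
  eapply is_derive_eq.
  - apply (is_derive_mult (fun t => 2 * (exp (a t) ^ 2 - exp (a t))) b).
    + apply is_derive_scal. apply (is_derive_minus (fun t => exp (a t) ^ 2) (fun t => exp (a t))); eauto.
    + exact Hb.
    + intros; apply Rmult_comm.
  - unfold minus, plus, opp, mult; simpl. match goal with |- ?a = ?b => change (@eq R a b) end. ring.
Qed.

Lemma polar_rep dx dy : exists t th, 0 <= t /\ t ^ 2 = dx ^ 2 + dy ^ 2 /\ 0 <= th <= 2 * PI /\
  dx = t * cos th /\ dy = t * sin th.
Proof.
  set (t := sqrt (dx ^ 2 + dy ^ 2)).
  assert (Ht0 : 0 <= t) by apply sqrt_pos.
  assert (Ht2 : t ^ 2 = dx ^ 2 + dy ^ 2).
  { unfold t. rewrite <- Rsqr_pow2, Rsqr_sqrt; auto. pose proof (pow2_ge_0 dx); pose proof (pow2_ge_0 dy); lra. }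
  pose proof PI_RGT_0.
  destruct (Req_dec t 0) as [Tz|Tnz].
  - exists 0, 0. rewrite Tz in Ht2.
    pose proof (pow2_ge_0 dx); pose proof (pow2_ge_0 dy).
    assert (Ex : dx ^ 2 = 0) by (apply Rle_antisym; lra). assert (Ey : dy ^ 2 = 0) by (apply Rle_antisym; lra).
    apply pow_eq_zero_R in Ex. apply pow_eq_zero_R in Ey.
    repeat split; try lra.
  - assert (Htp : 0 < t) by lra.
    set (c := dx / t).
    assert (Hc : -1 <= c <= 1).
    { assert (c ^ 2 <= 1).
      { unfold c. replace ((dx / t) ^ 2) with (dx ^ 2 / t ^ 2) by (field; lra).
        apply Rmult_le_reg_r with (t ^ 2); [apply pow_lt; lra|].
        replace (dx ^ 2 / t ^ 2 * t ^ 2) with (dx ^ 2) by (field; lra).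
        pose proof (pow2_ge_0 dy). lra. }
      split; nra. }
    set (s := sqrt (1 - c ^ 2)).
    assert (Hs0 : 0 <= s) by apply sqrt_pos.
    assert (Hs2 : s ^ 2 = 1 - c ^ 2).
    { unfold s. rewrite <- Rsqr_pow2, Rsqr_sqrt; auto. nra. }
    assert (Hts : t * s = Rabs dy).
    { assert (E : (t * s) ^ 2 = dy ^ 2).
      { replace ((t * s) ^ 2) with (t ^ 2 * s ^ 2) by ring. rewrite Hs2. unfold c.
        replace (t ^ 2 * (1 - (dx / t) ^ 2)) with (t ^ 2 - dx ^ 2) by (field; lra). lra. }
      assert (0 <= t * s) by (apply Rmult_le_pos; lra).
      pose proof (Rabs_pos dy).
      assert (Ea : Rabs dy * Rabs dy = dy ^ 2).
      { rewrite <- Rabs_mult. rewrite Rabs_pos_eq; [ring| nra]. }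
      assert (Ez : (t * s - Rabs dy) * (t * s + Rabs dy) = 0) by (simpl in E; nra).
      apply Rmult_integral in Ez. destruct Ez; nra. }
    assert (Hcos : cos (acos c) = c) by (apply cos_acos; auto).
    assert (Hsin : sin (acos c) = s) by (rewrite sin_acos by auto; unfold s; rewrite Rsqr_pow2; reflexivity).
    pose proof (acos_bound c).
    destruct (Rle_lt_dec 0 dy) as [Hy|Hy].
    + exists t, (acos c). repeat split; auto; try lra.
      * rewrite Hcos. unfold c. field. lra.
      * rewrite Hsin, Hts, Rabs_pos_eq; auto.
    + exists t, (2 * PI - acos c). repeat split; auto; try lra.
      * rewrite cos_minus, cos_2PI, sin_2PI, Hcos. unfold c. field. lra.
      * rewrite sin_minus, cos_2PI, sin_2PI, Hsin. rewrite Rabs_left in Hts; lra.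
Qed.

Definition Hf (u : R -> R -> R) x y := (1 - exp (u x y)) ^ 2.
Definition Hxf (u : R -> R -> R) x y := 2 * (exp (u x y) ^ 2 - exp (u x y)) * partial1 u x y.
Definition Hyf (u : R -> R -> R) x y := 2 * (exp (u x y) ^ 2 - exp (u x y)) * partial2 u x y.
Definition Hxxf (u : R -> R -> R) x y :=
  2 * (2 * exp (u x y) ^ 2 - exp (u x y)) * partial1 u x y * partial1 u x y
  + 2 * (exp (u x y) ^ 2 - exp (u x y)) * partial1 (partial1 u) x y.
Definition Hxyf (u : R -> R -> R) x y :=
  2 * (2 * exp (u x y) ^ 2 - exp (u x y)) * partial2 u x y * partial1 u x y
  + 2 * (exp (u x y) ^ 2 - exp (u x y)) * partial2 (partial1 u) x y.
Definition Hyxf (u : R -> R -> R) x y :=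
  2 * (2 * exp (u x y) ^ 2 - exp (u x y)) * partial1 u x y * partial2 u x y
  + 2 * (exp (u x y) ^ 2 - exp (u x y)) * partial1 (partial2 u) x y.
Definition Hyyf (u : R -> R -> R) x y :=
  2 * (2 * exp (u x y) ^ 2 - exp (u x y)) * partial2 u x y * partial2 u x y
  + 2 * (exp (u x y) ^ 2 - exp (u x y)) * partial2 (partial2 u) x y.

Lemma cont_exp2 (f : R -> R -> R) x y : continuity_2d_pt f x y ->
  continuity_2d_pt (fun a b => exp (f a b)) x y.
Proof. intros H. apply (continuity_1d_2d_pt_comp exp f); auto. apply derivable_continuous_pt, derivable_pt_exp. Qed.

Lemma cont_pow2 (f : R -> R -> R) x y : continuity_2d_pt f x y ->
  continuity_2d_pt (fun a b => f a b ^ 2) x y.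
Proof. intros H. apply (continuity_1d_2d_pt_comp (fun z => z ^ 2) f); auto. apply derivable_continuous_pt, derivable_pt_pow. Qed.

Ltac contH := repeat first
  [ apply continuity_2d_pt_minus | apply continuity_2d_pt_plus | apply continuity_2d_pt_mult | apply continuity_2d_pt_opp | apply continuity_2d_pt_const
  | apply cont_pow2 | apply cont_exp2 | assumption ].

Lemma smooth_facts (U : R -> R -> Prop) (u : R -> R -> R) a b : smooth_on U u -> U a b ->
  is_derive (fun t => u t b) a (partial1 u a b) /\ is_derive (fun t => u a t) b (partial2 u a b) /\
  is_derive (fun t => partial1 u t b) a (partial1 (partial1 u) a b) /\
  is_derive (fun t => partial1 u a t) b (partial2 (partial1 u) a b) /\
  is_derive (fun t => partial2 u t b) a (partial1 (partial2 u) a b) /\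
  is_derive (fun t => partial2 u a t) b (partial2 (partial2 u) a b) /\
  continuity_2d_pt u a b /\ continuity_2d_pt (partial1 u) a b /\ continuity_2d_pt (partial2 u) a b /\
  continuity_2d_pt (partial1 (partial1 u)) a b /\ continuity_2d_pt (partial2 (partial1 u)) a b /\
  continuity_2d_pt (partial1 (partial2 u)) a b /\ continuity_2d_pt (partial2 (partial2 u)) a b.
Proof.
  intros S Hab.
  destruct (S nil a b Hab) as [C0 [E0x E0y]].
  destruct (S (true :: nil) a b Hab) as [C1 [E1x E1y]].
  destruct (S (false :: nil) a b Hab) as [C2 [E2x E2y]].
  destruct (S (true :: true :: nil) a b Hab) as [C11 _].
  destruct (S (false :: true :: nil) a b Hab) as [C21 _].
  destruct (S (true :: false :: nil) a b Hab) as [C12 _].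
  destruct (S (false :: false :: nil) a b Hab) as [C22 _].
  simpl in *.
  repeat split; auto; apply Derive_correct; auto.
Qed.

Lemma H_C2box (U : R -> R -> Prop) (u : R -> R -> R) x0 y0 rho : smooth_on U u ->
  (forall a b, Rabs (a - x0) < rho -> Rabs (b - y0) < rho -> U a b) ->
  C2box x0 y0 rho (Hf u) (Hxf u) (Hyf u) (Hxxf u) (Hxyf u) (Hyxf u) (Hyyf u).
Proof.
  intros S HU.
  assert (F := fun a b Ha Hb => smooth_facts U u a b S (HU a b Ha Hb)).
  split; [|split; [|split]]; intros a b Ha Hb;
    destruct (F a b Ha Hb) as [X1 [X2 [X3 [X4 [X5 [X6 [C0 [C1 [C2 [C3 [C4 [C5 C6]]]]]]]]]]]].
  - split; [|split; [|split]].
    + unfold Hf, Hxf. apply (dH0 (fun t => u t b)). exact X1.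
    + unfold Hf, Hyf. apply (dH0 (fun t => u a t)). exact X2.
    + unfold Hxf. contH.
    + unfold Hyf. contH.
  - split; [|split; [|split]].
    + unfold Hxf, Hxxf. apply (dH1 (fun t => u t b) (fun t => partial1 u t b)); auto.
    + unfold Hxf, Hxyf. apply (dH1 (fun t => u a t) (fun t => partial1 u a t)); auto.
    + unfold Hxxf. contH.
    + unfold Hxyf. contH.
  - split; [|split; [|split]].
    + unfold Hyf, Hyxf. apply (dH1 (fun t => u t b) (fun t => partial2 u t b)); auto.
    + unfold Hyf, Hyyf. apply (dH1 (fun t => u a t) (fun t => partial2 u a t)); auto.
    + unfold Hyxf. contH.
    + unfold Hyyf. contH.
  - split; [|split; [|split]].
    + unfold Hxxf. contH.
    + unfold Hxyf. contH.
    + unfold Hyxf. contH.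
    + unfold Hyyf. contH.
Qed.

Lemma exp_le1 a : a <= 0 -> exp a <= 1.
Proof.
  intros H. destruct (Rle_lt_or_eq_dec a 0 H) as [Hl|Hq].
  - rewrite <- exp_0. left. apply exp_increasing; auto.
  - rewrite Hq, exp_0. lra.
Qed.

Lemma local_zero w1 w2 ps lam u x0 y0 : fst w1 * snd w2 - snd w1 * fst w2 <> 0 ->
  0 < lam -> is_solution w1 w2 ps lam u -> ~ singular w1 w2 ps x0 y0 -> u x0 y0 = 0 ->
  (forall x y, ~ singular w1 w2 ps x y -> u x y <= 0) ->
  exists d, 0 < d /\ forall x y, Rabs (x - x0) < d -> Rabs (y - y0) < d ->
    ~ singular w1 w2 ps x y /\ u x y = 0.
Proof.
  intros HD Hlam Hsol Hn Hu0 Hle.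
  pose proof Hsol as [_ [Hsm [Heq _]]].
  destruct (open_NS w1 w2 ps x0 y0 HD Hn) as [rho [Hrho Ho]].
  assert (HC := H_C2box (fun x y => ~ singular w1 w2 ps x y) u x0 y0 rho Hsm Ho).
  assert (HL : forall a b, Rabs (a - x0) < rho -> Rabs (b - y0) < rho ->
     0 <= Hf u a b /\ Hxxf u a b + Hyyf u a b <= 2 * lam * Hf u a b).
  { intros a b Ha Hb. assert (Hab := Ho a b Ha Hb).
    specialize (Heq a b Hab). unfold laplacian, grad_sq in Heq.
    unfold Hf, Hxxf, Hyyf.
    assert (He1 : exp (u a b) <= 1) by (apply exp_le1, Hle; auto).
    assert (He0 : 0 < exp (u a b)) by apply exp_pos.
    set (e := exp (u a b)) in *.
    set (p := partial1 u a b) in *. set (q := partial2 u a b) in *.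
    set (L1 := partial1 (partial1 u) a b) in *. set (L2 := partial2 (partial2 u) a b) in *.
    split; [apply pow2_ge_0|].
    assert (Id : 2 * (2 * e ^ 2 - e) * p * p + 2 * (e ^ 2 - e) * L1 +
       (2 * (2 * e ^ 2 - e) * q * q + 2 * (e ^ 2 - e) * L2)
       = 2 * (e ^ 2 - e) * (p ^ 2 + q ^ 2) + 2 * lam * e ^ 2 * (e - 1) ^ 2
         - 2 * e * ((1 - e) * (L1 + L2) - e * (p ^ 2 + q ^ 2) + lam * e * (e - 1) ^ 2)) by ring.
    rewrite Id.
    assert (Z : (1 - e) * (L1 + L2) - e * (p ^ 2 + q ^ 2) + lam * e * (e - 1) ^ 2 = 0) by lra.
    rewrite Z.
    assert (A1 : (e ^ 2 - e) * (p ^ 2 + q ^ 2) <= 0).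
    { assert (e ^ 2 - e <= 0) by nra. assert (0 <= p ^ 2 + q ^ 2) by (pose proof (pow2_ge_0 p); pose proof (pow2_ge_0 q); lra).
      nra. }
    assert (A2 : e ^ 2 * (e - 1) ^ 2 <= (1 - e) ^ 2).
    { assert (e ^ 2 <= 1) by nra. assert (0 <= (e - 1) ^ 2) by apply pow2_ge_0.
      replace ((1 - e) ^ 2) with (1 * (e - 1) ^ 2) by ring. nra. }
    nra. }
  destruct (strong_min x0 y0 rho (Hf u) (Hxf u) (Hyf u) (Hxxf u) (Hxyf u) (Hyxf u) (Hyyf u) (2 * lam)
              HC Hrho ltac:(lra) HL) as [r0 [Hr0 Hz]].
  { unfold Hf. rewrite Hu0, exp_0. ring. }
  exists (Rmin rho (r0 / 2)). split; [apply Rmin_pos; lra|].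
  intros x y Hx Hy.
  assert (Hx1 := Rlt_le_trans _ _ _ Hx (Rmin_l _ _)).
  assert (Hy1 := Rlt_le_trans _ _ _ Hy (Rmin_l _ _)).
  assert (Hx2 := Rlt_le_trans _ _ _ Hx (Rmin_r _ _)).
  assert (Hy2 := Rlt_le_trans _ _ _ Hy (Rmin_r _ _)).
  split; [apply Ho; auto|].
  destruct (polar_rep (x - x0) (y - y0)) as [t [th [Ht0 [Ht2 [Hth [Ex Ey]]]]]].
  assert (Htr : t <= r0).
  { apply Rabs_def2 in Hx2. apply Rabs_def2 in Hy2.
    assert (t ^ 2 < r0 ^ 2) by nra. nra. }
  specialize (Hz t th (conj Ht0 Htr) Hth). unfold polar, Hf in Hz.
  replace (x0 + t * cos th) with x in Hz by lra. replace (y0 + t * sin th) with y in Hz by lra.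
  apply pow_eq_zero_R in Hz.
  assert (E1 : exp (u x y) = 1) by lra.
  rewrite <- (ln_exp (u x y)), E1, ln_1. reflexivity.
Qed.


Lemma seg_close a b t s K d : 0 < K -> Rabs (b - a) < K -> 0 < d -> Rabs (s - t) < d / K ->
  Rabs ((a + s * (b - a)) - (a + t * (b - a))) < d.
Proof.
  intros HK Hb Hd Hst.
  replace ((a + s * (b - a)) - (a + t * (b - a))) with ((s - t) * (b - a)) by ring.
  rewrite Rabs_mult. pose proof (Rabs_pos (s - t)). pose proof (Rabs_pos (b - a)).
  assert (E : d / K * K = d) by (field; lra).
  assert (Rabs (s - t) * Rabs (b - a) <= Rabs (s - t) * K) by (apply Rmult_le_compat_l; lra).
  assert (Rabs (s - t) * K < d / K * K) by (apply Rmult_lt_compat_r; lra).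
  lra.
Qed.

Lemma conn w1 w2 ps lam u x0 y0 : fst w1 * snd w2 - snd w1 * fst w2 <> 0 -> 0 < lam ->
  is_solution w1 w2 ps lam u -> ps <> nil -> ~ singular w1 w2 ps x0 y0 -> u x0 y0 = 0 ->
  (forall x y, ~ singular w1 w2 ps x y -> u x y <= 0) -> False.
Proof.
  intros HD Hlam Hsol Hps Hn Hu0 Hle.
  destruct ps as [|[px py] ps'] eqn:Eps; [contradiction|]. rewrite <- Eps in *.
  assert (Hp : singular w1 w2 ps px py).
  { exists (px, py). split; [rewrite Eps; left; auto| apply le_refl]. }
  set (Z := fun x y => ~ singular w1 w2 ps x y /\ u x y = 0).
  assert (LZ : forall x y, Z x y -> exists d, 0 < d /\ forall a b, Rabs (a - x) < d -> Rabs (b - y) < d -> Z a b).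
  { intros x y [Hnx Hux]. apply (local_zero w1 w2 ps lam u x y HD Hlam Hsol Hnx Hux Hle). }
  set (gx := fun t => x0 + t * (px - x0)). set (gy := fun t => y0 + t * (py - y0)).
  set (K := 1 + Rabs (px - x0) + Rabs (py - y0)).
  assert (HK : 0 < K /\ Rabs (px - x0) < K /\ Rabs (py - y0) < K).
  { unfold K. pose proof (Rabs_pos (px - x0)). pose proof (Rabs_pos (py - y0)). lra. }
  assert (Gc : forall s t d, 0 < d -> Rabs (s - t) < d / K ->
      Rabs (gx s - gx t) < d /\ Rabs (gy s - gy t) < d).
  { intros s t d Hd Hst. split; [unfold gx; apply (seg_close x0 px t s K d) | unfold gy; apply (seg_close y0 py t s K d)]; tauto. }
  assert (G0 : gx 0 = x0 /\ gy 0 = y0) by (unfold gx, gy; split; ring).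
  assert (G1 : gx 1 = px /\ gy 1 = py) by (unfold gx, gy; split; ring).
  set (T := fun t => 0 <= t <= 1 /\ forall s, 0 <= s <= t -> Z (gx s) (gy s)).
  assert (T0 : T 0).
  { split; [lra|]. intros s Hs. assert (s = 0) by lra. subst s. destruct G0 as [-> ->]. split; auto. }
  destruct (completeness T) as [ts [Hub Hlub]].
  { exists 1. intros t [Ht _]. lra. }
  { exists 0. exact T0. }
  assert (Hts : 0 <= ts <= 1).
  { split; [apply Hub; auto| apply Hlub; intros t [Ht _]; lra]. }
  assert (Below : forall s, 0 <= s < ts -> Z (gx s) (gy s)).
  { intros s Hs. apply NNPP. intros HZ.
    assert (ts <= s).
    { apply Hlub. intros t [Ht Ht2]. destruct (Rle_lt_dec t s); auto.
      exfalso. apply HZ. apply Ht2. lra. }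
    lra. }
  destruct (classic (singular w1 w2 ps (gx ts) (gy ts))) as [Hs|Hns].
  - destruct (near_sing w1 w2 ps lam u (gx ts) (gy ts) (-1) Hsol Hs) as [d [Hd Hd2]].
    assert (Htp : 0 < ts).
    { destruct (Rle_lt_or_eq_dec 0 ts (proj1 Hts)) as [|E]; auto.
      exfalso. rewrite <- E in Hs. destruct G0 as [E1 E2]. rewrite E1, E2 in Hs. contradiction. }
    set (s := ts - Rmin ts (d / K) / 2).
    assert (Hm : 0 < Rmin ts (d / K) /\ Rmin ts (d / K) <= ts /\ Rmin ts (d / K) <= d / K).
    { assert (0 < d / K) by (apply Rdiv_lt_0_compat; lra).
      unfold Rmin; destruct Rle_dec; lra. }
    assert (Hs1 : 0 <= s < ts) by (unfold s; lra).
    destruct (Below s Hs1) as [Hns Hus].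
    destruct (Gc s ts d Hd) as [C1 C2].
    { unfold s. replace (ts - Rmin ts (d / K) / 2 - ts) with (- (Rmin ts (d / K) / 2)) by ring.
      rewrite Rabs_Ropp, Rabs_pos_eq; lra. }
    specialize (Hd2 (gx s) (gy s) C1 C2 Hns). lra.
  -
    assert (Hzt : u (gx ts) (gy ts) = 0).
    { destruct (Rle_lt_or_eq_dec 0 ts (proj1 Hts)) as [Htp|E].
      - apply NNPP. intros Hnz.
        assert (Hpos : 0 < Rabs (u (gx ts) (gy ts))) by (apply Rabs_pos_lt; auto).
        destruct (u_cont w1 w2 ps lam u (gx ts) (gy ts) Hsol Hns (mkposreal _ Hpos)) as [d Hd].
        pose proof (cond_pos d) as Hdp.
        set (s := ts - Rmin ts (d / K) / 2).
        assert (Hm : 0 < Rmin ts (d / K) /\ Rmin ts (d / K) <= ts /\ Rmin ts (d / K) <= d / K).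
        { assert (0 < d / K) by (apply Rdiv_lt_0_compat; lra).
          unfold Rmin; destruct Rle_dec; lra. }
        assert (Hs1 : 0 <= s < ts) by (unfold s; lra).
        destruct (Below s Hs1) as [_ Hus].
        destruct (Gc s ts d Hdp) as [C1 C2].
        { unfold s. replace (ts - Rmin ts (d / K) / 2 - ts) with (- (Rmin ts (d / K) / 2)) by ring.
          rewrite Rabs_Ropp, Rabs_pos_eq; lra. }
        specialize (Hd (gx s) (gy s) C1 C2). simpl in Hd. rewrite Hus in Hd.
        replace (0 - u (gx ts) (gy ts)) with (- u (gx ts) (gy ts)) in Hd by ring.
        rewrite Rabs_Ropp in Hd. lra.
      - rewrite <- E. destruct G0 as [E1 E2]. rewrite E1, E2. auto. }
    destruct (LZ (gx ts) (gy ts) (conj Hns Hzt)) as [d [Hd Hd2]].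
    set (t' := Rmin 1 (ts + d / K / 2)).
    assert (HdK : 0 < d / K) by (apply Rdiv_lt_0_compat; lra).
    assert (Ht' : ts <= t' <= 1 /\ (t' = 1 \/ t' = ts + d / K / 2) /\ t' <= ts + d / K / 2).
    { unfold t', Rmin; destruct Rle_dec; lra. }
    assert (Tt' : T t').
    { split; [lra|]. intros s Hs.
      destruct (Rlt_le_dec s ts) as [Hlt|Hge].
      - apply Below; lra.
      - destruct (Gc s ts d Hd) as [C1 C2].
        { rewrite Rabs_pos_eq; [|lra]. destruct Ht' as [_ [_ E]]; lra. }
        apply Hd2; auto. }
    assert (t' <= ts) by (apply Hub; auto).
    assert (Ets : ts = 1).
    { destruct Ht' as [_ [[E|E] _]]; lra. }
    apply Hns. rewrite Ets. destruct G1 as [E1 E2]. rewrite E1, E2. auto.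
Qed.

Theorem lemma3p2 (w1 w2 : R * R) (ps : list (R * R)) (lam : R) (u : R -> R -> R) :
  fst w1 * snd w2 - snd w1 * fst w2 <> 0 ->
  ps <> nil ->
  0 < lam ->
  is_solution w1 w2 ps lam u ->
  forall x y, ~ singular w1 w2 ps x y -> u x y < 0.
Proof.
  intros HD Hps Hlam Hsol x y Hn.
  apply Rnot_le_lt. intros H0.
  destruct (exists_max w1 w2 ps lam u x y HD Hsol Hn) as [x0 [y0 [Hn0 [Hge Hmax]]]].
  destruct (Rle_lt_or_eq_dec 0 (u x0 y0)) as [Hp|Hz]; [lra| |].
  - apply (pos_max_absurd w1 w2 ps lam u x0 y0 HD Hlam Hsol Hn0 Hmax Hp).
  - apply (conn w1 w2 ps lam u x0 y0 HD Hlam Hsol Hps Hn0 (eq_sym Hz)).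
    intros a b Hab. rewrite Hz. apply Hmax; auto.
Qed.
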